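(* Let $T\subseteq{}^{<\omega_1}\omega_1$ be a tree (closed under initial segments, ordered by $\subsetneq$) of cardinality $\aleph_1$ with no uncountable branch. Then the forcing notion $\mathbb P(T)$ satisfies the countable chain condition.
   Context: For an ordinal $\gamma<\omega_1$, ${\rm ht}(\gamma)$ is the unique $\alpha$ with $\gamma\in[\omega\alpha,\omega\alpha+\omega)$. For $\eta\in{}^{<\omega_1}\omega_1$, $\lg(\eta)$ is its length. A weak embedding is a map $f$ with $x<y\Rightarrow f(x)<f(y)$. The forcing $\mathbb P(T)$ consists of all $p=(u^p,v^p,<_p,f^p,c^p)$ such that: (1) $u^p\subseteq T$ and $v^p\subseteq\omega_1$ are finite and $\langle\rangle\in u^p$; (2) $u^p$ is closed under intersections (longest common initial segments); (3) $<_p$ is a partial order on $v^p$; (4) $f^p$ is a surjective weak embedding from $(u^p,\subsetneq)$ onto $(v^p,<_p)$; (5) ${\rm ht}(f^p(\eta))=\lg(\eta)$ for every $\eta\in u^p$; (6) $c^p:v^p\to\omega$ satisfies $\alpha<_p\beta\Rightarrow c^p(\alpha)\ne c^p(\beta)$. The order is coordinatewise inclusion: $p\le q$ iff $u^p\subseteq u^q$, $v^p\subseteq v^q$, $<_p\subseteq<_q$, $f^p\subseteq f^q$, $c^p\subseteq c^q$. *)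

(* Defs.v *)
(* omega_1 is modelled abstractly: any strict well-order
   (W, lt) which is total, uncountable, and all of whose proper initial
   segments are countable (such a W is isomorphic to omega_1). *)
From Stdlib Require Import List.
Set Implicit Arguments.

Definition countable {X : Type} (A : X -> Prop) : Prop :=
  exists g : X -> nat, forall x y, A x -> A y -> g x = g y -> x = y.

Definition finite {X : Type} (A : X -> Prop) : Prop :=
  exists l : list X, forall x, A x <-> In x l.

Section Omega1.
Variable W : Type.
Variable lt : W -> W -> Prop.

Definition le (x y : W) : Prop := lt x y \/ x = y.

Definition is_omega1 : Prop :=
  well_founded lt /\
  (forall x y z, lt x y -> lt y z -> lt x z) /\
  (forall x y, lt x y \/ x = y \/ lt y x) /\
  ~ countable (fun _ : W => True) /\
  (forall a : W, countable (fun x => lt x a)).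

(* delta is 0 or a limit ordinal: it has no immediate predecessor *)
Definition lim0 (d : W) : Prop :=
  ~ exists x, lt x d /\ ~ exists y, lt x y /\ lt y d.

(* ht g = a  iff  g in [omega*a, omega*a + omega), i.e. the set of
   0-or-limit ordinals <= g (= {omega*b | b <= a}) has order type a+1. *)
Definition ht_rel (g a : W) : Prop :=
  exists h : W -> W,
    (forall d, le d g -> lim0 d -> le (h d) a) /\
    (forall d d', le d g -> lim0 d -> le d' g -> lim0 d' -> lt d d' ->
        lt (h d) (h d')) /\
    (forall b, le b a -> exists d, le d g /\ lim0 d /\ h d = b).

(* elements of ^{<omega_1} omega_1: partial maps W -> W whose domain is a
   proper initial segment {x | x < alpha}; alpha is the length *)
Definition sq := W -> option W.

Definition lg_rel (s : sq) (a : W) : Prop :=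
  forall x, s x <> None <-> lt x a.

Definition is_seq (s : sq) : Prop := exists a, lg_rel s a.

Definition prefix (s t : sq) : Prop := forall x, s x <> None -> t x = s x.

Definition sprefix (s t : sq) : Prop := prefix s t /\ s <> t.

Definition empty_seq : sq := fun _ => None.

Definition is_meet (s t r : sq) : Prop :=
  forall x,
    ((forall y, le y x -> s y = t y) -> r x = s x) /\
    (~ (forall y, le y x -> s y = t y) -> r x = None).

Definition is_tree (T : sq -> Prop) : Prop :=
  (forall s, T s -> is_seq s) /\
  (forall s t, T t -> is_seq s -> prefix s t -> T s).

Definition card_aleph1 (T : sq -> Prop) : Prop :=
  exists e : W -> sq,
    (forall x, T (e x)) /\
    (forall x y, e x = e y -> x = y) /\
    (forall s, T s -> exists x, e x = s).

Definition no_uncountable_branch (T : sq -> Prop) : Prop :=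
  forall B : sq -> Prop,
    (forall s, B s -> T s) ->
    (forall s t, B s -> B t -> prefix s t \/ prefix t s) ->
    countable B.

(* a condition p = (u, v, <_p, f, c); f and c given by their graphs *)
Record cond := Cond {
  cu : sq -> Prop;
  cv : W -> Prop;
  clt : W -> W -> Prop;
  cf : sq -> W -> Prop;
  cc : W -> nat -> Prop
}.

Definition is_cond (T : sq -> Prop) (p : cond) : Prop :=
  (forall s, cu p s -> T s) /\ finite (cu p) /\ finite (cv p) /\
  cu p empty_seq /\
  (forall s t, cu p s -> cu p t -> exists r, is_meet s t r /\ cu p r) /\
  (forall a b, clt p a b -> cv p a /\ cv p b) /\
  (forall a, ~ clt p a a) /\
  (forall a b d, clt p a b -> clt p b d -> clt p a d) /\
  (forall s a, cf p s a -> cu p s /\ cv p a) /\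
  (forall s a b, cf p s a -> cf p s b -> a = b) /\
  (forall s, cu p s -> exists a, cf p s a) /\
  (forall a, cv p a -> exists s, cf p s a) /\
  (forall s t a b, sprefix s t -> cf p s a -> cf p t b -> clt p a b) /\
  (forall s a, cf p s a -> forall l, lg_rel s l -> ht_rel a l) /\
  (forall a n, cc p a n -> cv p a) /\
  (forall a n m, cc p a n -> cc p a m -> n = m) /\
  (forall a, cv p a -> exists n, cc p a n) /\
  (forall a b n m, clt p a b -> cc p a n -> cc p b m -> n <> m).

(* p <= q : q extends p *)
Definition cle (p q : cond) : Prop :=
  (forall s, cu p s -> cu q s) /\
  (forall a, cv p a -> cv q a) /\
  (forall a b, clt p a b -> clt q a b) /\
  (forall s a, cf p s a -> cf q s a) /\
  (forall a n, cc p a n -> cc q a n).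

Definition compatible (T : sq -> Prop) (p q : cond) : Prop :=
  exists r, is_cond T r /\ cle p r /\ cle q r.

Definition ccc (T : sq -> Prop) : Prop :=
  forall A : cond -> Prop,
    (forall p, A p -> is_cond T p) ->
    (forall p q, A p -> A q -> p <> q -> ~ compatible T p q) ->
    countable A.

End Omega1.

(* Main.v *)
Require Import Defs.
From Stdlib Require Import List Arith Lia Classical ClassicalEpsilon FunctionalExtensionality Cantor FinFun Relations.
Import ListNotations.

Section Cnt.

Lemma cnt_sub {X} (A B : X -> Prop) : (forall x, B x -> A x) -> countable A -> countable B.
Proof. intros H [g Hg]. exists g. intros x y Bx By; apply Hg; auto. Qed.

Lemma cnt_empty {X} (A : X -> Prop) : (forall x, ~ A x) -> countable A.
Proof. intros H. exists (fun _ => 0). intros x y Ax; exfalso; exact (H x Ax). Qed.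

Lemma cnt_inj {X Y} (A : X -> Prop) (B : Y -> Prop) (f : X -> Y) :
  (forall x, A x -> B (f x)) -> (forall x y, A x -> A y -> f x = f y -> x = y) ->
  countable B -> countable A.
Proof.
  intros H1 H2 [g Hg]. exists (fun x => g (f x)). intros x y Ax Ay E.
  apply H2; auto.
Qed.

Lemma cnt_nat (A : nat -> Prop) : countable A.
Proof. exists (fun n => n). auto. Qed.

Lemma cnt_image {X Y} (A : X -> Prop) (f : X -> Y) :
  countable A -> countable (fun y => exists x, A x /\ f x = y).
Proof.
  intros [g Hg].
  exists (fun y => match excluded_middle_informative (exists x, A x /\ f x = y) with
                   | left H => g (proj1_sig (constructive_indefinite_description _ H))
                   | right _ => 0 end).
  intros y1 y2 H1 H2.
  destruct (excluded_middle_informative (exists x, A x /\ f x = y1)) as [e1|n1]; [|contradiction].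
  destruct (excluded_middle_informative (exists x, A x /\ f x = y2)) as [e2|n2]; [|contradiction].
  destruct (constructive_indefinite_description _ e1) as [x1 [Ax1 Fx1]].
  destruct (constructive_indefinite_description _ e2) as [x2 [Ax2 Fx2]]. simpl.
  intros E. assert (x1 = x2) by (apply Hg; auto). subst. reflexivity.
Qed.

Lemma code_inj (a b c d : nat) : to_nat (a, b) = to_nat (c, d) -> a = c /\ b = d.
Proof.
  intros E. assert (E2 : of_nat (to_nat (a,b)) = of_nat (to_nat (c,d))) by (rewrite E; reflexivity).
  rewrite !cancel_of_to in E2. inversion E2; auto.
Qed.

Lemma cnt_union_nat {X} (A : nat -> X -> Prop) :
  (forall n, countable (A n)) -> countable (fun x => exists n, A n x).
Proof.
  intros H.
  set (g := fun n => proj1_sig (constructive_indefinite_description _ (H n))).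
  assert (Hg : forall n x y, A n x -> A n y -> g n x = g n y -> x = y).
  { intros n. unfold g. destruct (constructive_indefinite_description _ (H n)) as [gg Hgg]. exact Hgg. }
  set (nn := fun x => match excluded_middle_informative (exists n, A n x) with
                      | left e => proj1_sig (constructive_indefinite_description _ e)
                      | right _ => 0 end).
  assert (Hnn : forall x, (exists n, A n x) -> A (nn x) x).
  { intros x e. unfold nn. destruct (excluded_middle_informative (exists n, A n x)) as [e'|n']; [|contradiction].
    destruct (constructive_indefinite_description _ e'); auto. }
  exists (fun x => to_nat (nn x, g (nn x) x)).
  intros x y Hx Hy E. apply code_inj in E. destruct E as [E1 E2].
  apply Hnn in Hx. apply Hnn in Hy. rewrite E1 in Hx, E2. apply (Hg (nn y)); auto.
Qed.

Lemma cnt_union {X I} (C : I -> Prop) (A : I -> X -> Prop) :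
  countable C -> (forall i, C i -> countable (A i)) ->
  countable (fun x => exists i, C i /\ A i x).
Proof.
  intros [gC HgC] H.
  set (B := fun n x => exists i, C i /\ gC i = n /\ A i x).
  apply cnt_sub with (A := fun x => exists n, B n x).
  { intros x [i [Ci Ai]]. exists (gC i). exists i. auto. }
  apply cnt_union_nat. intros n.
  destruct (classic (exists i, C i /\ gC i = n)) as [[i [Ci Ei]]|N].
  - apply cnt_sub with (A := A i); [|apply H; auto].
    intros x [j [Cj [Ej Aj]]]. assert (i = j) by (apply HgC; auto; congruence). subst; auto.
  - apply cnt_empty. intros x [j [Cj [Ej _]]]. apply N. eauto.
Qed.

Lemma cnt_union2 {X} (A B : X -> Prop) : countable A -> countable B ->
  countable (fun x => A x \/ B x).
Proof.
  intros HA HB.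
  apply cnt_sub with (A := fun x => exists n : nat, (fun n : nat => match n with 0 => A | _ => B end) n x).
  - intros x [Ax|Bx]; [exists 0|exists 1]; auto.
  - apply cnt_union_nat. intros [|n]; auto.
Qed.

Lemma cnt_list {X} (l : list X) : countable (fun x => In x l).
Proof.
  induction l as [|a l IH].
  - apply cnt_empty; simpl; auto.
  - apply cnt_sub with (A := fun x => (fun y => y = a) x \/ In x l).
    + intros x [E|I]; auto.
    + apply cnt_union2; auto. exists (fun _ => 0). intros; congruence.
Qed.

Lemma cnt_finite {X} (A : X -> Prop) : finite A -> countable A.
Proof. intros [l Hl]. apply cnt_sub with (A := fun x => In x l); [firstorder|apply cnt_list]. Qed.

Lemma cnt_union_list {X I} (l : list I) (A : I -> X -> Prop) :
  (forall i, In i l -> countable (A i)) -> countable (fun x => exists i, In i l /\ A i x).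
Proof. intros H. apply cnt_union; auto. apply cnt_list. Qed.

Lemma cnt_union_seq {X} (n : nat) (A : nat -> X -> Prop) :
  (forall i, i < n -> countable (A i)) -> countable (fun x => exists i, i < n /\ A i x).
Proof.
  intros H. apply cnt_sub with (A := fun x => exists i, In i (seq 0 n) /\ A i x).
  - intros x [i [Hi Ai]]. exists i. split; auto. apply in_seq; lia.
  - apply cnt_union_list. intros i Hi. apply in_seq in Hi. apply H; lia.
Qed.

Lemma pigeon_cnt {X Y} (J : X -> Prop) (C : Y -> Prop) (k : X -> Y) :
  ~ countable J -> countable C -> (forall x, J x -> C (k x)) ->
  exists y, C y /\ ~ countable (fun x => J x /\ k x = y).
Proof.
  intros HJ HC Hk. apply NNPP. intros N. apply HJ.
  apply cnt_sub with (A := fun x => exists y, C y /\ (fun y x => J x /\ k x = y) y x).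
  - intros x Jx. exists (k x). auto.
  - apply cnt_union; auto. intros y Cy. apply NNPP. intros N2. apply N. eauto.
Qed.

Lemma pigeon_nat {X} (J : X -> Prop) (k : X -> nat) :
  ~ countable J -> exists n, ~ countable (fun x => J x /\ k x = n).
Proof.
  intros HJ. destruct (@pigeon_cnt X nat J (fun _ => True) k HJ (cnt_nat _) (fun _ _ => I)) as [n [_ H]]; eauto.
Qed.

Lemma uncnt_ne {X} (J : X -> Prop) : ~ countable J -> exists x, J x.
Proof. intros H. apply NNPP. intros N. apply H. apply cnt_empty. firstorder. Qed.

Lemma uncnt_minus {X} (J C : X -> Prop) : ~ countable J -> countable C ->
  ~ countable (fun x => J x /\ ~ C x).
Proof.
  intros HJ HC N. apply HJ. apply cnt_sub with (A := fun x => (J x /\ ~ C x) \/ C x).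
  - intros x Jx. destruct (classic (C x)); auto.
  - apply cnt_union2; auto.
Qed.

End Cnt.
Module UFM.
From mathcomp Require Import ssreflect ssrfun ssrbool.
From mathcomp Require Import boolp classical_sets filter.

Lemma ultra_exists_mc (X : Type) (F : (X -> Prop) -> Prop) :
  F (fun _ => True) ->
  (forall A B, F A -> F B -> F (fun x => A x /\ B x)) ->
  (forall A B : X -> Prop, (forall x, A x -> B x) -> F A -> F B) ->
  (forall A, F A -> exists x, A x) ->
  exists U : (X -> Prop) -> Prop,
    (forall A, F A -> U A) /\
    (forall A B, U A -> U B -> U (fun x => A x /\ B x)) /\
    (forall A B : X -> Prop, (forall x, A x -> B x) -> U A -> U B) /\
    (forall A, U A -> exists x, A x) /\
    (forall A, U A \/ U (fun x => ~ A x)).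
Proof.
move=> HT HI HS HE.
have FF : ProperFilter (F : set_system X).
  split.
  - move=> /HE [x] //.
  - split.
    + have -> : (setT : set X) = (fun _ => True) by [].
      exact: HT.
    + move=> A B FA FB; exact: HI.
    + move=> A B AB; exact: HS.
have [U [UU FU]] := ultraFilterLemma FF.
exists U; split; first by move=> A; apply: FU.
split; first by move=> A B UA UB; exact: (filterI UA UB).
split; first by move=> A B AB UA; exact: (filterS AB UA).
split; first by move=> A UA; exact: (filter_ex UA).
by move=> A; have := in_ultra_setVsetC A UU.
Qed.
End UFM.
Section ListU.
Variable A : Type.
Definition deq (x y : A) : {x = y} + {x <> y} := excluded_middle_informative (x = y).

Fixpoint pos (x : A) (l : list A) : nat :=
  match l with [] => 0 | y :: l => if deq x y then 0 else S (pos x l) end.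

Lemma pos_lt x l : In x l -> pos x l < length l.
Proof. induction l; simpl; [tauto|]. destruct (deq x a); [lia|]. intros [E|H]; [congruence|]. specialize (IHl H); lia. Qed.

Lemma nth_pos x l d : In x l -> nth (pos x l) l d = x.
Proof. induction l; simpl; [tauto|]. destruct (deq x a); auto. intros [E|H]; [congruence|auto]. Qed.

Lemma pos_inj x y l : In x l -> In y l -> pos x l = pos y l -> x = y.
Proof.
  induction l; simpl; [tauto|]. destruct (deq x a), (deq y a); try congruence.
  intros [E|H1] [E2|H2] E3; try congruence. injection E3; auto.
Qed.

Lemma pos_nth l i d : NoDup l -> i < length l -> pos (nth i l d) l = i.
Proof.
  intros N. revert i. induction N as [|a l Na N IH]; simpl; intros i Hi; [lia|].
  destruct i; simpl.
  - destruct (deq a a); congruence.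
  - destruct (deq (nth i l d) a) as [E|E].
    + exfalso. apply Na. rewrite <- E. apply nth_In. lia.
    + f_equal. apply IH. lia.
Qed.

Lemma finite_nodup (P : A -> Prop) : finite P -> exists l, NoDup l /\ forall x, P x <-> In x l.
Proof.
  intros [l Hl]. exists (nodup deq l). split. apply NoDup_nodup.
  intros x. rewrite nodup_In. auto.
Qed.

Lemma finite_sub (P Q : A -> Prop) : finite P -> (forall x, Q x -> P x) -> finite Q.
Proof.
  intros [l Hl] H. exists (filter (fun x => if excluded_middle_informative (Q x) then true else false) l).
  intros x. rewrite filter_In. destruct (excluded_middle_informative (Q x)); split; intros; try tauto.
  split; auto. apply Hl; auto. destruct H0; discriminate.
Qed.

End ListU.
Arguments pos {A}.

Lemma finite_image2 {A B C} (P : A -> Prop) (Q : B -> Prop) (f : A -> B -> C) :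
  finite P -> finite Q -> finite (fun z => exists a b, P a /\ Q b /\ z = f a b).
Proof.
  intros [l1 H1] [l2 H2]. exists (map (fun ab => f (fst ab) (snd ab)) (list_prod l1 l2)).
  intros z. rewrite in_map_iff. split.
  - intros [a [b [Pa [Qb E]]]]. exists (a, b). split; auto. apply in_prod; [apply H1|apply H2]; auto.
  - intros [[a b] [E I]]. apply in_prod_iff in I. exists a, b. simpl in E. firstorder.
Qed.

Lemma finite_union {A} (P Q : A -> Prop) : finite P -> finite Q -> finite (fun x => P x \/ Q x).
Proof. intros [l1 H1] [l2 H2]. exists (l1 ++ l2). intros x. rewrite in_app_iff. firstorder. Qed.
Section Ord.
Variable W : Type.
Variable lt : W -> W -> Prop.
Hypothesis Hw : is_omega1 lt.

Lemma wfW : well_founded lt. Proof. apply Hw. Qed.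
Lemma lt_trans x y z : lt x y -> lt y z -> lt x z. Proof. apply Hw. Qed.
Lemma lt_total x y : lt x y \/ x = y \/ lt y x. Proof. apply Hw. Qed.
Lemma W_unc : ~ countable (fun _ : W => True). Proof. apply Hw. Qed.
Lemma init_cnt a : countable (fun x => lt x a). Proof. apply Hw. Qed.

Lemma lt_irr x : ~ lt x x.
Proof. induction (wfW x) as [x _ IH]. intros H. apply (IH x H H). Qed.
Lemma lt_asym x y : lt x y -> ~ lt y x.
Proof. intros H1 H2. apply (lt_irr x). eapply lt_trans; eauto. Qed.
Lemma le_refl x : le lt x x. Proof. right; auto. Qed.
Lemma le_trans x y z : le lt x y -> le lt y z -> le lt x z.
Proof. unfold le. intros [H1|H1] [H2|H2]; subst; auto. left; eapply lt_trans; eauto. Qed.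
Lemma lt_le_trans x y z : lt x y -> le lt y z -> lt x z.
Proof. intros H [H2|H2]; subst; auto. eapply lt_trans; eauto. Qed.
Lemma le_lt_trans x y z : le lt x y -> lt y z -> lt x z.
Proof. intros [H|H] H2; subst; auto. eapply lt_trans; eauto. Qed.
Lemma not_lt_le x y : ~ lt x y -> le lt y x.
Proof. intros H. destruct (lt_total x y) as [A|[A|A]]; [contradiction| |]; unfold le; auto. Qed.
Lemma le_not_lt x y : le lt x y -> ~ lt y x.
Proof. intros [H|H] H2; subst. apply (lt_asym _ _ H H2). apply (lt_irr _ H2). Qed.
Lemma le_antisym x y : le lt x y -> le lt y x -> x = y.
Proof. intros [H|H] H2; auto. exfalso. apply (le_not_lt _ _ H2 H). Qed.

Lemma minimal (P : W -> Prop) : (exists x, P x) -> exists x, P x /\ forall y, P y -> le lt x y.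
Proof.
  intros [x Px]. apply NNPP. intros N.
  assert (forall z, ~ P z).
  { intros z. induction (wfW z) as [z _ IH]. intros Pz. apply N. exists z. split; auto.
    intros y Py. apply not_lt_le. intros H. apply (IH y H Py). }
  eapply H; eauto.
Qed.

Lemma cnt_le x : countable (fun y => le lt y x).
Proof.
  apply cnt_sub with (A := fun y => lt y x \/ (fun y => y = x) y).
  - intros y [H|H]; auto.
  - apply cnt_union2. apply init_cnt. exists (fun _ => 0). intros; congruence.
Qed.

Lemma bounded (S : W -> Prop) : countable S -> exists b, forall s, S s -> lt s b.
Proof.
  intros HS. apply NNPP. intros N. apply W_unc.
  apply cnt_sub with (A := fun y => exists s, S s /\ (fun s y => le lt y s) s y).
  - intros y _. apply NNPP. intros N2. apply N. exists y. intros s Ss. apply NNPP. intros N3.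
    apply N2. exists s. split; auto. apply not_lt_le; auto.
  - apply cnt_union; auto. intros s _. apply cnt_le.
Qed.

Lemma succ_ex x : exists y, lt x y /\ forall z, lt x z -> le lt y z.
Proof.
  destruct (bounded (fun s => s = x)) as [b Hb].
  { exists (fun _ => 0). intros; congruence. }
  apply (minimal (fun z => lt x z)). exists b; auto.
Qed.

Definition succ x := proj1_sig (constructive_indefinite_description _ (succ_ex x)).
Lemma succ_lt x : lt x (succ x).
Proof. unfold succ. exact (proj1 (proj2_sig (constructive_indefinite_description _ (succ_ex x)))). Qed.
Lemma succ_min x z : lt x z -> le lt (succ x) z.
Proof. unfold succ. exact (proj2 (proj2_sig (constructive_indefinite_description _ (succ_ex x))) z). Qed.
Lemma succ_not_lim0 x : ~ lim0 lt (succ x).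
Proof.
  intros H. apply H. exists x. split. apply succ_lt. intros [y [H1 H2]].
  apply (le_not_lt _ _ (succ_min _ _ H1) H2).
Qed.

Fixpoint itr (n : nat) (x : W) : W := match n with 0 => x | S n => succ (itr n x) end.

Lemma itr_le n x : le lt x (itr n x).
Proof. induction n; simpl. apply le_refl. eapply le_trans; eauto. left; apply succ_lt. Qed.
Lemma itr_lt n m x : n < m -> lt (itr n x) (itr m x).
Proof.
  intros H. induction H; simpl. apply succ_lt. eapply lt_trans; eauto. apply succ_lt.
Qed.
Lemma itr_inj n m x : itr n x = itr m x -> n = m.
Proof.
  intros E. destruct (Nat.lt_total n m) as [H|[H|H]]; auto;
  apply (itr_lt _ _ x) in H; rewrite E in H; exfalso; eapply lt_irr; eauto.
Qed.

Lemma lim0_above b : exists e, lt b e /\ lim0 lt e.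
Proof.
  destruct (bounded (fun y => exists n, (fun _ => True) n /\ itr n b = y)) as [c Hc].
  { apply cnt_image. apply cnt_nat. }
  destruct (minimal (fun x => forall n, lt (itr n b) x)) as [e0 [H1 H2]].
  { exists c. intros n. apply Hc. eauto. }
  exists e0. split. apply (H1 0).
  intros [x [Hx N]]. destruct (classic (forall n, lt (itr n b) x)) as [A|A].
  - apply (le_not_lt _ _ (H2 x A) Hx).
  - apply not_all_ex_not in A. destruct A as [n A]. apply not_lt_le in A.
    apply N. exists (itr (S n) b). split.
    + eapply le_lt_trans; eauto. apply itr_lt; auto.
    + apply H1.
Qed.

Definition HT (g a : W) (h : W -> W) : Prop :=
    (forall d, le lt d g -> lim0 lt d -> le lt (h d) a) /\
    (forall d d', le lt d g -> lim0 lt d -> le lt d' g -> lim0 lt d' -> lt d d' ->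
        lt (h d) (h d')) /\
    (forall b, le lt b a -> exists d, le lt d g /\ lim0 lt d /\ h d = b).

Lemma ht_HT g a : ht_rel lt g a <-> exists h, HT g a h.
Proof. unfold ht_rel, HT. tauto. Qed.

Lemma HT_mono {g a h d d'} : HT g a h -> le lt d g -> lim0 lt d -> le lt d' g -> lim0 lt d' ->
  le lt d d' -> le lt (h d) (h d').
Proof. intros [_ [H _]] ? ? ? ? [L|L]; subst. left; auto. apply le_refl. Qed.

Lemma HT_top {g a h} : HT g a h -> exists d, le lt d g /\ lim0 lt d /\ h d = a /\
   (forall e, le lt e g -> lim0 lt e -> le lt e d).
Proof.
  intros HH. pose proof HH as [H1 [H2 H3]].
  destruct (H3 a (le_refl a)) as [d [D1 [D2 D3]]]. exists d. repeat split; auto.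
  intros e E1 E2. apply not_lt_le. intros L. specialize (H2 _ _ D1 D2 E1 E2 L).
  specialize (H1 _ E1 E2). rewrite D3 in H2. apply (le_not_lt _ _ H1 H2).
Qed.

Lemma strict_incr_ge (k : W -> W) l :
  (forall b b', le lt b' l -> lt b b' -> lt (k b) (k b')) -> forall b, le lt b l -> le lt b (k b).
Proof.
  intros Hk b. induction (wfW b) as [b _ IH]. intros Hb. apply not_lt_le. intros L.
  assert (Hkb : le lt (k b) l) by (left; eapply lt_le_trans; eauto).
  specialize (IH _ L Hkb). specialize (Hk _ _ Hb L). apply (le_not_lt _ _ IH Hk).
Qed.

Lemma HT_top_lt g l h d g' h' d' :
  HT g l h -> le lt d g -> lim0 lt d -> (forall e, le lt e g -> lim0 lt e -> le lt e d) ->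
  HT g' l h' -> le lt d' g' -> lim0 lt d' -> h' d' = l -> lt d d' -> False.
Proof.
  intros HH Dg Dl Dt HH' Dg' Dl' Dh' L.
  pose proof HH as [H1 [H2 H3]]. pose proof HH' as [H1' [H2' H3']].
  set (k := fun b => match excluded_middle_informative (exists e, le lt e g /\ lim0 lt e /\ h e = b) with
          | left E => h' (proj1_sig (constructive_indefinite_description _ E)) | right _ => b end).
  assert (Hk : forall b, le lt b l -> exists e, le lt e g /\ lim0 lt e /\ h e = b /\ k b = h' e).
  { intros b Hb. unfold k. destruct (excluded_middle_informative _) as [E|E].
    - destruct (constructive_indefinite_description _ E) as [e He]. simpl. exists e. tauto.
    - exfalso. apply E. auto. }
  assert (Hg' : forall e, le lt e g -> lim0 lt e -> le lt e g' /\ lt e d').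
  { intros e E1 E2. assert (lt e d') by (apply le_lt_trans with d; auto). split; auto.
    left. apply lt_le_trans with d'; auto. }
  assert (Inc : forall b b', le lt b' l -> lt b b' -> lt (k b) (k b')).
  { intros b b' Hb' Lb. assert (Hb : le lt b l) by (left; eapply lt_le_trans; eauto).
    destruct (Hk b Hb) as [e [E1 [E2 [E3 E4]]]]. destruct (Hk b' Hb') as [e' [E1' [E2' [E3' E4']]]].
    rewrite E4, E4'. destruct (Hg' e E1 E2), (Hg' e' E1' E2').
    apply H2'; auto. apply NNPP. intros N. apply not_lt_le in N.
    pose proof (HT_mono HH E1' E2' E1 E2 N) as X. rewrite E3, E3' in X. apply (le_not_lt _ _ X Lb). }
  pose proof (strict_incr_ge k l Inc l (le_refl l)) as Ge.
  destruct (Hk l (le_refl l)) as [e [E1 [E2 [E3 E4]]]]. destruct (Hg' e E1 E2) as [G1 G2].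
  specialize (H2' _ _ G1 E2 Dg' Dl' G2). rewrite <- E4, Dh' in H2'. apply (le_not_lt _ _ Ge H2').
Qed.

Lemma HT_top_unique {g l h d g' h' d'} :
  HT g l h -> le lt d g -> lim0 lt d -> h d = l -> (forall e, le lt e g -> lim0 lt e -> le lt e d) ->
  HT g' l h' -> le lt d' g' -> lim0 lt d' -> h' d' = l -> (forall e, le lt e g' -> lim0 lt e -> le lt e d') ->
  d = d'.
Proof.
  intros. destruct (lt_total d d') as [L|[L|L]]; auto; exfalso.
  - eapply (HT_top_lt g l h d g' h' d'); eauto.
  - eapply (HT_top_lt g' l h' d' g h d); eauto.
Qed.

Lemma level_cnt l : countable (fun a => ht_rel lt a l).
Proof.
  destruct (classic (exists a, ht_rel lt a l)) as [[a0 Ha0]|N]; [|apply cnt_empty; firstorder].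
  apply ht_HT in Ha0. destruct Ha0 as [h0 H0]. destruct (HT_top H0) as [d0 [D1 [D2 [D3 D4]]]].
  apply cnt_sub with (A := fun y => exists n, (fun _ => True) n /\ itr n d0 = y); [|apply cnt_image, cnt_nat].
  intros a Ha. apply ht_HT in Ha. destruct Ha as [h Hh]. destruct (HT_top Hh) as [d [E1 [E2 [E3 E4]]]].
  assert (d = d0) by (apply (HT_top_unique Hh E1 E2 E3 E4 H0 D1 D2 D3 D4)). subst d.
  assert (forall x, le lt d0 x -> le lt x a -> exists n, itr n d0 = x).
  { intros x. induction (wfW x) as [x _ IH]. intros X1 X2.
    destruct X1 as [X1|X1]; [|subst; exists 0; auto].
    destruct (classic (lim0 lt x)) as [Lx|Lx].
    { exfalso. apply (le_not_lt _ _ (E4 x X2 Lx) X1). }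
    unfold lim0 in Lx. apply NNPP in Lx. destruct Lx as [y [Y1 Y2]].
    assert (Dy : le lt d0 y).
    { apply not_lt_le. intros L. apply Y2. exists d0; auto. }
    destruct (IH y Y1 Dy) as [n Hn]. { left; eapply lt_le_trans; eauto. }
    exists (S n). simpl. rewrite Hn. apply le_antisym.
    - apply succ_min; auto.
    - apply not_lt_le. intros L. apply Y2. exists (succ y). split; auto. apply succ_lt. }
  destruct (H a E1 (le_refl _)) as [n Hn]. eauto.
Qed.

Definition Base (d l : W) := lim0 lt d /\ ht_rel lt d l.

Lemma HT_self_top {d l h} : HT d l h -> lim0 lt d -> h d = l /\ (forall e, le lt e d -> lim0 lt e -> le lt e d).
Proof.
  intros HH Ld. destruct (HT_top HH) as [t [T1 [T2 [T3 T4]]]].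
  assert (t = d) by (apply le_antisym; auto; apply T4; auto; apply le_refl). subst; auto.
Qed.

Lemma Base_unique d d' l : Base d l -> Base d' l -> d = d'.
Proof.
  intros [L1 H1] [L2 H2]. apply ht_HT in H1. apply ht_HT in H2. destruct H1 as [h H1], H2 as [h' H2].
  destruct (HT_self_top H1 L1), (HT_self_top H2 L2).
  apply (HT_top_unique H1 (le_refl d) L1 H H0 H2 (le_refl d') L2 H3 H4).
Qed.

Lemma HT_sub {d l h e} : HT d l h -> lim0 lt e -> le lt e d -> HT e (h e) h.
Proof.
  intros HH Le Ed. pose proof HH as [H1 [H2 H3]]. split; [|split].
  - intros e' E1 E2. eapply HT_mono; eauto. eapply le_trans; eauto.
  - intros a b A1 A2 B1 B2 L. apply H2; auto; eapply le_trans; eauto.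
  - intros b Hb. destruct (H3 b) as [e' [E1 [E2 E3]]]. { eapply le_trans; eauto. }
    exists e'. repeat split; auto. apply not_lt_le. intros L. subst b.
    pose proof (H2 _ _ Ed Le E1 E2 L). apply (le_not_lt _ _ Hb H).
Qed.

Lemma Base_ex l : exists d, Base d l.
Proof.
  induction (wfW l) as [l _ IH].
  set (D := fun x => match excluded_middle_informative (exists d, Base d x) with
        | left E => proj1_sig (constructive_indefinite_description _ E) | right _ => x end).
  assert (HD : forall l', lt l' l -> Base (D l') l').
  { intros l' L. unfold D. destruct (excluded_middle_informative _) as [E|E].
    - destruct (constructive_indefinite_description _ E); auto.
    - exfalso; apply E; auto. }
  destruct (bounded (fun y => exists x, (fun x => lt x l) x /\ D x = y)) as [b Hb].
  { apply cnt_image. apply init_cnt. }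
  destruct (lim0_above b) as [e0 [E0 L0]].
  destruct (minimal (fun e => lim0 lt e /\ forall l', lt l' l -> lt (D l') e)) as [d [[Ld Cd] Md]].
  { exists e0. split; auto. intros l' L'. eapply lt_trans; [apply Hb|]; eauto. }
  assert (Fa : forall e l1, lt l1 l -> Base e l1 -> e = D l1).
  { intros. eapply Base_unique; eauto. }
  assert (Fsub : forall l', lt l' l -> forall e, lim0 lt e -> le lt e (D l') ->
             exists l'', le lt l'' l' /\ e = D l'').
  { intros l' L' e Le Ee. destruct (HD l' L') as [B1 B2]. apply ht_HT in B2. destruct B2 as [h' H'].
    pose proof (HT_sub H' Le Ee) as Hs. exists (h' e). split.
    - destruct H' as [X _]. apply X; auto.
    - apply Fa. eapply le_lt_trans; [|eauto]. destruct H' as [X _]. apply X; auto.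
      split; auto. apply ht_HT. eauto. }
  assert (F1 : forall e, lim0 lt e -> lt e d -> exists l', lt l' l /\ e = D l').
  { intros e Le Ed. assert (Ne : ~ (lim0 lt e /\ forall l', lt l' l -> lt (D l') e)).
    { intros C. apply (le_not_lt _ _ (Md e C) Ed). }
    assert (exists l', lt l' l /\ ~ lt (D l') e) as [l' [L1 L2]].
    { apply NNPP. intros N. apply Ne. split; auto. intros l' L'. apply NNPP. intros N2. apply N. eauto. }
    apply not_lt_le in L2. destruct (Fsub l' L1 e Le L2) as [l'' [A1 A2]]. exists l''. split; auto.
    eapply le_lt_trans; eauto. }
  assert (F2 : forall l1 l2, lt l1 l2 -> lt l2 l -> lt (D l1) (D l2)).
  { intros l1 l2 L12 L2. destruct (HD l2 L2) as [B1 B2]. apply ht_HT in B2. destruct B2 as [h2 H2].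
    destruct (HT_self_top H2 B1) as [T1 _].
    pose proof H2 as [_ [_ S3]]. destruct (S3 l1) as [e [X1 [X2 X3]]]. { left; auto. }
    assert (e = D l1).
    { apply Fa. eapply lt_trans; eauto. split; auto. apply ht_HT. exists h2. rewrite <- X3.
      eapply HT_sub; eauto. }
    subst e. destruct X1 as [X1|X1]; auto. exfalso. rewrite X1, T1 in X3. subst. apply (lt_irr _ L12). }
  assert (F3 : forall l1 l2, lt l1 l -> lt l2 l -> D l1 = D l2 -> l1 = l2).
  { intros l1 l2 A B E. destruct (lt_total l1 l2) as [C|[C|C]]; auto; exfalso.
    - pose proof (F2 _ _ C B). rewrite E in H. apply (lt_irr _ H).
    - pose proof (F2 _ _ C A). rewrite E in H. apply (lt_irr _ H). }
  set (h := fun e => match excluded_middle_informative (e = d) with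
          | left _ => l | right _ => epsilon (inhabits l) (fun l' => lt l' l /\ D l' = e) end).
  assert (Hh1 : forall e, lim0 lt e -> lt e d -> lt (h e) l /\ D (h e) = e).
  { intros e Le Ed. unfold h. destruct (excluded_middle_informative (e = d)) as [E|E].
    { subst; exfalso; apply (lt_irr _ Ed). }
    apply (epsilon_spec (inhabits l) (fun l' => lt l' l /\ D l' = e)).
    destruct (F1 e Le Ed) as [l' [A B]]. eauto. }
  assert (Hhd : h d = l).
  { unfold h. destruct (excluded_middle_informative (d = d)); auto. contradiction. }
  exists d. split; auto. apply ht_HT. exists h. split; [|split].
  - intros e [Ed|Ed] Le.
    + left. apply (Hh1 e Le Ed).
    + subst e. rewrite Hhd. apply le_refl.
  - intros e e' E1 L1 E2 L2 Lee. destruct E2 as [E2|E2].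
    + assert (Ed : lt e d) by (eapply lt_trans; eauto).
      destruct (Hh1 e L1 Ed) as [A1 A2]. destruct (Hh1 e' L2 E2) as [B1 B2].
      destruct (lt_total (h e) (h e')) as [C|[C|C]]; auto; exfalso.
      * rewrite <- A2, <- B2, C in Lee. apply (lt_irr _ Lee).
      * pose proof (F2 _ _ C A1). rewrite A2, B2 in H. apply (lt_asym _ _ H Lee).
    + subst e'. rewrite Hhd. destruct E1 as [E1|E1]. apply (Hh1 e L1 E1). subst e; exfalso; apply (lt_irr _ Lee).
  - intros bb [Bl|Bl].
    + exists (D bb). destruct (HD bb Bl) as [B1 B2]. repeat split; auto.
      * left. apply Cd; auto.
      * assert (Dd : lt (D bb) d) by (apply Cd; auto).
        destruct (Hh1 _ B1 Dd) as [A1 A2]. apply F3; auto.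
    + subst bb. exists d. repeat split; auto; apply le_refl.
Qed.

Lemma base_itr_lim0 d e n : lim0 lt e -> le lt d e -> le lt e (itr n d) -> e = d.
Proof.
  intros Le. induction n; simpl; intros A B.
  - apply le_antisym; auto.
  - destruct B as [B|B].
    + apply IHn; auto. apply not_lt_le. intros L. apply succ_min in L. apply (le_not_lt _ _ L B).
    + subst. exfalso. apply (succ_not_lim0 _ Le).
Qed.


Lemma level_fresh l (F : list W) : exists a, ht_rel lt a l /\ ~ In a F.
Proof.
  destruct (Base_ex l) as [d [Ld Hd]]. apply ht_HT in Hd. destruct Hd as [h Hh].
  pose proof Hh as [H1 [H2 H3]].
  assert (Small : forall n e, lim0 lt e -> le lt e (itr n d) -> le lt e d).
  { intros n e Le E. apply not_lt_le. intros L.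
    pose proof (base_itr_lim0 d e n Le (or_introl L) E). subst e. apply (lt_irr _ L). }
  assert (Hn : forall n, ht_rel lt (itr n d) l).
  { intros n. apply ht_HT. exists h. split; [|split].
    - intros e E Le. apply H1; auto. apply (Small n); auto.
    - intros e e' E L E' L'. apply H2; auto; eapply Small; eauto.
    - intros b Hb. destruct (H3 b Hb) as [e [E1 [E2 E3]]]. exists e. repeat split; auto.
      eapply le_trans; eauto. apply itr_le; auto. }
  destruct (classic (exists n, ~ In (itr n d) F)) as [[n Nn]|N]; [eauto|exfalso].
  assert (Inc : incl (map (fun n => itr n d) (seq 0 (S (length F)))) F).
  { intros x Hx. apply in_map_iff in Hx. destruct Hx as [n [E _]]. subst x.
    apply NNPP. intros N2. apply N. eauto. }
  apply NoDup_incl_length in Inc.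
  - rewrite length_map, length_seq in Inc. lia.
  - apply FinFun.Injective_map_NoDup. intros a b E. eapply itr_inj; eauto. apply seq_NoDup.
Qed.


Lemma W_inh : inhabited W.
Proof. apply NNPP. intros N. apply W_unc. apply cnt_empty. intros x _. apply N. constructor; auto. Qed.

Lemma lg_unique s a b : lg_rel lt s a -> lg_rel lt s b -> a = b.
Proof.
  intros Ha Hb. destruct (lt_total a b) as [L|[L|L]]; auto; exfalso.
  - apply Hb in L. apply Ha in L. apply (lt_irr _ L).
  - apply Ha in L. apply Hb in L. apply (lt_irr _ L).
Qed.

Definition lg (s : sq W) : W := epsilon W_inh (lg_rel lt s).
Lemma lg_spec s : is_seq lt s -> lg_rel lt s (lg s).
Proof. intros [a Ha]. unfold lg. apply (epsilon_spec W_inh (lg_rel lt s)). eauto. Qed.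
Lemma lg_eq s a : lg_rel lt s a -> lg s = a.
Proof. intros H. apply (lg_unique s); auto. apply lg_spec. exists a; auto. Qed.

Lemma seq_dom s x : is_seq lt s -> (s x <> None <-> lt x (lg s)).
Proof. intros H. apply (lg_spec s H). Qed.

Lemma prefix_refl (s : sq W) : prefix s s. Proof. intros x _; auto. Qed.
Lemma prefix_trans (s t u : sq W) : prefix s t -> prefix t u -> prefix s u.
Proof. intros H1 H2 x Hx. rewrite H2. apply H1; auto. rewrite H1; auto. Qed.
Lemma prefix_antisym (s t : sq W) : prefix s t -> prefix t s -> s = t.
Proof.
  intros H1 H2. apply functional_extensionality. intros x.
  destruct (s x) eqn:E. { symmetry. rewrite H1; auto. rewrite E. discriminate. }
  destruct (t x) eqn:E2; auto. rewrite <- E, H2; [auto|]. rewrite E2; discriminate.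
Qed.

Lemma prefix_lg s t : is_seq lt s -> is_seq lt t -> prefix s t -> le lt (lg s) (lg t).
Proof.
  intros Hs Ht P. apply not_lt_le. intros L. apply (seq_dom s _ Hs) in L.
  pose proof (P _ L). assert (t (lg t) <> None) by congruence.
  apply (seq_dom t _ Ht) in H0. apply (lt_irr _ H0).
Qed.

Lemma prefix_of_lg s1 s2 t : is_seq lt s1 -> is_seq lt s2 -> prefix s1 t -> prefix s2 t ->
  le lt (lg s1) (lg s2) -> prefix s1 s2.
Proof.
  intros H1 H2 P1 P2 L x Hx. pose proof Hx as Hx'. apply (seq_dom _ _ H1) in Hx'.
  assert (s2 x <> None) by (apply (seq_dom _ _ H2); eapply lt_le_trans; eauto).
  rewrite <- (P2 x H). apply P1; auto.
Qed.

Lemma prefix_comparable s1 s2 t : is_seq lt s1 -> is_seq lt s2 -> prefix s1 t -> prefix s2 t ->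
  prefix s1 s2 \/ prefix s2 s1.
Proof.
  intros H1 H2 P1 P2. destruct (lt_total (lg s1) (lg s2)) as [L|[L|L]].
  - left. eapply prefix_of_lg; eauto. left; auto.
  - left. eapply prefix_of_lg; eauto. right; auto.
  - right. eapply prefix_of_lg; eauto. left; auto.
Qed.

Lemma prefix_lg_eq s t : is_seq lt s -> is_seq lt t -> prefix s t -> lg s = lg t -> s = t.
Proof.
  intros Hs Ht P E. apply prefix_antisym; auto. apply (prefix_of_lg t s t); auto.
  apply prefix_refl. rewrite E. apply le_refl.
Qed.

Lemma pred_cnt (T : sq W -> Prop) t : is_tree lt T -> is_seq lt t -> countable (fun s => T s /\ prefix s t).
Proof.
  intros HT Ht.
  apply (cnt_inj (fun s => T s /\ prefix s t) (fun x => le lt x (lg t)) lg).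
  - intros s [Ts P]. apply prefix_lg; auto. apply HT; auto.
  - intros s1 s2 [T1 P1] [T2 P2] E. assert (S1 : is_seq lt s1) by (apply HT; auto).
    assert (S2 : is_seq lt s2) by (apply HT; auto).
    destruct (prefix_comparable s1 s2 t S1 S2 P1 P2) as [Q|Q].
    + apply prefix_lg_eq; auto.
    + symmetry. apply prefix_lg_eq; auto.
  - apply cnt_le.
Qed.

Definition meet (s t : sq W) : sq W := fun x =>
  if excluded_middle_informative (forall y, le lt y x -> s y = t y) then s x else None.

Lemma meet_is s t : is_meet lt s t (meet s t).
Proof.
  intros x. unfold meet. destruct (excluded_middle_informative _); split; intros; auto; contradiction.
Qed.

Lemma is_meet_unique s t r : is_meet lt s t r -> r = meet s t.
Proof.
  intros H. apply functional_extensionality. intros x. unfold meet. destruct (H x) as [H1 H2].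
  destruct (excluded_middle_informative _); auto.
Qed.

Lemma meet_prefix_l s t : prefix (meet s t) s.
Proof. intros x. unfold meet. destruct (excluded_middle_informative _); auto. intros N; contradiction. Qed.
Lemma meet_prefix_r s t : prefix (meet s t) t.
Proof.
  intros x. unfold meet. destruct (excluded_middle_informative _) as [A|A]; [|intros N; contradiction].
  intros _. symmetry. apply A. apply le_refl.
Qed.

Lemma meet_sym s t : meet s t = meet t s.
Proof.
  apply functional_extensionality. intros x. unfold meet.
  destruct (excluded_middle_informative (forall y, le lt y x -> s y = t y)) as [A|A];
  destruct (excluded_middle_informative (forall y, le lt y x -> t y = s y)) as [B|B]; auto.
  - apply A. apply le_refl.
  - exfalso. apply B. intros. symmetry; auto.
  - exfalso. apply A. intros. symmetry; auto.
Qed.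

Lemma meet_seq s t : is_seq lt s -> is_seq lt (meet s t).
Proof.
  intros Hs.
  set (D := fun x => meet s t x <> None).
  assert (Ddown : forall x y, D x -> lt y x -> D y).
  { unfold D, meet. intros x y. destruct (excluded_middle_informative (forall z, le lt z x -> s z = t z)) as [A|A];
    [|intros N; contradiction]. intros Sx L.
    destruct (excluded_middle_informative (forall z, le lt z y -> s z = t z)) as [B|B].
    - apply (seq_dom _ _ Hs). apply (seq_dom _ _ Hs) in Sx. eapply lt_trans; eauto.
    - exfalso. apply B. intros z Z. apply A. eapply le_trans; eauto. left; auto. }
  destruct (minimal (fun x => ~ D x)) as [a [Na Ma]].
  { exists (lg s). unfold D. intros N. assert (s (lg s) <> None) by (rewrite (meet_prefix_l s t _ N); auto).
    apply (seq_dom _ _ Hs) in H. apply (lt_irr _ H). }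
  exists a. intros x. split.
  - intros Dx. apply NNPP. intros N. apply not_lt_le in N. destruct N as [N|N].
    + apply Na. eapply Ddown; eauto.
    + subst; contradiction.
  - intros L. apply NNPP. intros N. apply (le_not_lt _ _ (Ma x N) L).
Qed.

Lemma meet_greatest r s t : is_seq lt r -> prefix r s -> prefix r t -> prefix r (meet s t).
Proof.
  intros Hr P1 P2 x Hx. unfold meet. destruct (excluded_middle_informative _) as [A|A].
  - rewrite P1; auto.
  - exfalso. apply A. intros y Y.
    assert (r y <> None).
    { destruct Y as [Y|Y]; [|subst; auto]. apply (seq_dom _ _ Hr). apply (seq_dom _ _ Hr) in Hx.
      eapply lt_trans; eauto. }
    rewrite P1, P2; auto.
Qed.

Lemma tree_seq (T : sq W -> Prop) s : is_tree lt T -> T s -> is_seq lt s.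
Proof. intros HT Ts. apply HT; auto. Qed.

Lemma meet_T (T : sq W -> Prop) s t : is_tree lt T -> T s -> T (meet s t).
Proof.
  intros HT Ts. apply (proj2 HT (meet s t) s); auto. apply meet_seq. apply HT; auto. apply meet_prefix_l.
Qed.

Lemma meet3 s t w : is_seq lt s -> is_seq lt t -> is_seq lt w ->
  meet (meet s t) w = meet s t \/ meet (meet s t) w = meet s w.
Proof.
  intros Hs Ht Hw0.
  assert (SA : is_seq lt (meet s t)) by (apply meet_seq; auto).
  assert (SB : is_seq lt (meet s w)) by (apply meet_seq; auto).
  assert (SM : is_seq lt (meet (meet s t) w)) by (apply meet_seq; auto).
  destruct (prefix_comparable (meet s t) (meet s w) s SA SB (meet_prefix_l _ _) (meet_prefix_l _ _)) as [P|P].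
  - left. apply prefix_antisym. apply meet_prefix_l.
    apply meet_greatest; auto. apply prefix_refl. eapply prefix_trans; eauto. apply meet_prefix_r.
  - right. apply prefix_antisym.
    + apply meet_greatest; auto. eapply prefix_trans. apply meet_prefix_l. apply meet_prefix_l.
      apply meet_prefix_r.
    + apply meet_greatest; auto. apply meet_prefix_r.
Qed.

Lemma sprefix_irr (s : sq W) : ~ sprefix s s.
Proof. intros [_ N]. apply N; auto. Qed.
Lemma sprefix_trans (s t u : sq W) : sprefix s t -> sprefix t u -> sprefix s u.
Proof.
  intros [P1 N1] [P2 N2]. split. eapply prefix_trans; eauto.
  intros E. subst. apply N2. apply prefix_antisym; auto.
Qed.
Lemma sprefix_prefix_trans (s t u : sq W) : sprefix s t -> prefix t u -> sprefix s u.
Proof.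
  intros [P1 N1] P2. split. eapply prefix_trans; eauto.
  intros E. subst. apply N1. apply prefix_antisym; auto.
Qed.
Lemma prefix_sprefix_trans (s t u : sq W) : prefix s t -> sprefix t u -> sprefix s u.
Proof.
  intros P1 [P2 N2]. split. eapply prefix_trans; eauto.
  intros E. subst. apply N2. apply prefix_antisym; auto.
Qed.
Section Acc.
Variable T : sq W -> Prop.
Variable p : cond W.
Hypothesis Hp : is_cond lt T p.
Lemma c_T s : cu p s -> T s. Proof. apply Hp. Qed.
Lemma c_finu : finite (cu p). Proof. apply Hp. Qed.
Lemma c_finv : finite (cv p). Proof. apply Hp. Qed.
Lemma c_empty : cu p (@empty_seq W). Proof. apply Hp. Qed.
Lemma c_meet s t : cu p s -> cu p t -> exists r, is_meet lt s t r /\ cu p r. Proof. apply Hp. Qed.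
Lemma c_ltv a b : clt p a b -> cv p a /\ cv p b. Proof. apply Hp. Qed.
Lemma c_irr a : ~ clt p a a. Proof. apply Hp. Qed.
Lemma c_trans a b d : clt p a b -> clt p b d -> clt p a d. Proof. apply Hp. Qed.
Lemma c_fdom s a : cf p s a -> cu p s /\ cv p a. Proof. apply Hp. Qed.
Lemma c_ffun s a b : cf p s a -> cf p s b -> a = b. Proof. apply Hp. Qed.
Lemma c_ftot s : cu p s -> exists a, cf p s a. Proof. apply Hp. Qed.
Lemma c_fsurj a : cv p a -> exists s, cf p s a. Proof. apply Hp. Qed.
Lemma c_femb s t a b : sprefix s t -> cf p s a -> cf p t b -> clt p a b. Proof. apply Hp. Qed.
Lemma c_ht s a : cf p s a -> forall l, lg_rel lt s l -> ht_rel lt a l. Proof. apply Hp. Qed.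
Lemma c_cdom a n : cc p a n -> cv p a. Proof. apply Hp. Qed.
Lemma c_cfun a n k : cc p a n -> cc p a k -> n = k. Proof. apply Hp. Qed.
Lemma c_ctot a : cv p a -> exists n, cc p a n. Proof. apply Hp. Qed.
Lemma c_ccol a b n k : clt p a b -> cc p a n -> cc p b k -> n <> k. Proof. apply Hp. Qed.
Lemma c_meet_closed s t : cu p s -> cu p t -> cu p (meet s t).
Proof. intros A B. destruct (c_meet s t A B) as [r [M C]]. rewrite <- (is_meet_unique _ _ _ M). auto. Qed.
Lemma c_seq s : is_tree lt T -> cu p s -> is_seq lt s. Proof. intros HT H. apply HT. apply c_T; auto. Qed.
End Acc.
Lemma in_pair_fun {X Y} (P : list (X * Y)) x y y' :
  NoDup (map fst P) -> In (x, y) P -> In (x, y') P -> y = y'.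
Proof.
  induction P as [|[a b] P IH]; simpl; [tauto|]. intros N. inversion N as [|? ? Na Nl]; subst.
  intros [E|I1] [E2|I2].
  - congruence.
  - inversion E; subst. exfalso. apply Na. apply in_map_iff. exists (x, y'); auto.
  - inversion E2; subst. exfalso. apply Na. apply in_map_iff. exists (x, y); auto.
  - apply IH; auto.
Qed.

Lemma in_pair_inj {X Y} (P : list (X * Y)) x x' y :
  NoDup (map snd P) -> In (x, y) P -> In (x', y) P -> x = x'.
Proof.
  induction P as [|[a b] P IH]; simpl; [tauto|]. intros N. inversion N as [|? ? Na Nl]; subst.
  intros [E|I1] [E2|I2].
  - congruence.
  - inversion E; subst. exfalso. apply Na. apply in_map_iff. exists (x', y); auto.
  - inversion E2; subst. exfalso. apply Na. apply in_map_iff. exists (x, y); auto.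
  - apply IH; auto.
Qed.

Section Amalg.
Variable T : sq W -> Prop.
Hypothesis HT : is_tree lt T.
Variables p q : cond W.
Hypothesis Hp : is_cond lt T p.
Hypothesis Hq : is_cond lt T q.
Variable tv : W -> W.
Hypothesis Htv_in : forall a, cv q a -> cv p (tv a).
Hypothesis Htv_id : forall a, cv q a -> cv p a -> tv a = a.
Hypothesis Htv_lt : forall a b, clt q a b -> clt p (tv a) (tv b).
Hypothesis Htv_cc : forall a c, cc q a c -> cc p (tv a) c.
Hypothesis Hroot : forall s a, cu p s -> cu q s -> cf q s a -> cf p s a.
Hypothesis Hcross : forall s t, cu p s -> ~ cu q s -> cu q t -> ~ cu p t -> ~ prefix s t /\ ~ prefix t s.

Definition Mnode s := (exists e n, cu p e /\ cu q n /\ s = meet e n) /\ ~ cu p s /\ ~ cu q s.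

Variable P : list (sq W * W).
Hypothesis HP_nd1 : NoDup (map fst P).
Hypothesis HP_nd2 : NoDup (map snd P).
Hypothesis HP_M : forall s, Mnode s <-> In s (map fst P).
Hypothesis HP_ht : forall s w, In (s, w) P -> ht_rel lt w (lg s).
Hypothesis HP_fresh : forall s w, In (s, w) P -> ~ cv p w /\ ~ cv q w.
Variable c0 : nat.
Hypothesis Hc0 : forall a c, cc p a c \/ cc q a c -> c < c0.

Definition fP s := epsilon W_inh (cf p s).
Definition fQ s := epsilon W_inh (cf q s).
Lemma fP_spec s : cu p s -> cf p s (fP s).
Proof. intros H. apply (epsilon_spec W_inh (cf p s)). apply (c_ftot _ _ Hp); auto. Qed.
Lemma fQ_spec s : cu q s -> cf q s (fQ s).
Proof. intros H. apply (epsilon_spec W_inh (cf q s)). apply (c_ftot _ _ Hq); auto. Qed.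
Lemma fPQ s : cu p s -> cu q s -> fP s = fQ s.
Proof. intros A B. apply (c_ffun _ _ Hp s). apply fP_spec; auto. apply Hroot; auto. apply fQ_spec; auto. Qed.

Definition isN a := In a (map snd P).
Definition fM s := epsilon W_inh (fun w => In (s, w) P).
Lemma fM_spec s : Mnode s -> In (s, fM s) P.
Proof.
  intros H. apply HP_M in H. apply in_map_iff in H. destruct H as [[s' w] [E I]]. simpl in E. subst s'.
  apply (epsilon_spec W_inh (fun w => In (s, w) P)). eauto.
Qed.
Definition nd a := epsilon (inhabits (@empty_seq W)) (fun s => In (s, a) P).
Lemma nd_spec a : isN a -> In (nd a, a) P.
Proof.
  intros H. apply in_map_iff in H. destruct H as [[s w] [E I]]. simpl in E. subst w.
  apply (epsilon_spec (inhabits (@empty_seq W)) (fun s => In (s, a) P)). eauto.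
Qed.

Definition fr s := if excluded_middle_informative (cu p s) then fP s else
                   if excluded_middle_informative (cu q s) then fQ s else fM s.
Definition cur s := cu p s \/ cu q s \/ exists e n, cu p e /\ cu q n /\ s = meet e n.
Definition cvr a := cv p a \/ cv q a \/ isN a.
Definition cfr s a := cur s /\ a = fr s.
Definition ccr a c := cc p a c \/ cc q a c \/ (isN a /\ c = c0 + pos a (map snd P)).
Definition BaseR a b := clt p a b \/ clt q a b \/ exists s t, sprefix s t /\ cfr s a /\ cfr t b.
Definition cltr := clos_trans W BaseR.
Definition rr := Cond cur cvr cltr cfr ccr.

Lemma fr_p s : cu p s -> fr s = fP s.
Proof. intros H. unfold fr. destruct (excluded_middle_informative (cu p s)); auto; contradiction. Qed.
Lemma fr_q s : cu q s -> fr s = fQ s.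
Proof.
  intros H. unfold fr. destruct (excluded_middle_informative (cu p s)). apply fPQ; auto.
  destruct (excluded_middle_informative (cu q s)); auto; contradiction.
Qed.
Lemma fr_M s : Mnode s -> fr s = fM s.
Proof.
  intros [_ [A B]]. unfold fr. destruct (excluded_middle_informative (cu p s)); [contradiction|].
  destruct (excluded_middle_informative (cu q s)); [contradiction|auto].
Qed.

Lemma cur_cases s : cur s -> cu p s \/ cu q s \/ Mnode s.
Proof.
  intros [H|[H|H]]; auto. destruct (classic (cu p s)); auto. destruct (classic (cu q s)); auto.
  right; right. split; auto.
Qed.

Lemma Mnode_split s : Mnode s -> exists e n, cu p e /\ ~ cu q e /\ cu q n /\ ~ cu p n /\ s = meet e n.
Proof.
  intros [[e [n [A [B E]]]] [C D]]. exists e, n. repeat split; auto.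
  - intros X. apply D. subst. apply (c_meet_closed _ _ Hq); auto.
  - intros X. apply C. subst. apply (c_meet_closed _ _ Hp); auto.
Qed.

Lemma Mnode_below s t : Mnode t -> (cu p s \/ cu q s) -> prefix s t -> cu p s /\ cu q s.
Proof.
  intros Mt Hs Pst. destruct (Mnode_split _ Mt) as [e [n [A [B [C [D E]]]]]]. subst t.
  destruct Hs as [Hs|Hs].
  - split; auto. apply NNPP. intros N. apply (proj1 (Hcross s n Hs N C D)).
    eapply prefix_trans; eauto. apply meet_prefix_r.
  - split; auto. apply NNPP. intros N. apply (proj2 (Hcross e s A B Hs N)).
    eapply prefix_trans; eauto. apply meet_prefix_l.
Qed.

Lemma old_split s t : (cu p s \/ cu q s) -> (cu p t \/ cu q t) -> prefix s t ->
  (cu p s /\ cu p t) \/ (cu q s /\ cu q t).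
Proof.
  intros Hs Ht Pst. destruct (classic (cu p s)) as [A|A]; destruct (classic (cu p t)) as [B|B]; auto.
  - destruct Ht as [Ht|Ht]; [contradiction|]. destruct (classic (cu q s)) as [C|C]; auto.
    exfalso. apply (proj1 (Hcross s t A C Ht B)); auto.
  - destruct Hs as [Hs|Hs]; [contradiction|]. destruct (classic (cu q t)) as [C|C]; auto.
    exfalso. apply (proj2 (Hcross t s B C Hs A)); auto.
  - destruct Hs as [Hs|Hs]; [contradiction|]. destruct Ht as [Ht|Ht]; [contradiction|]. auto.
Qed.

Definition old a := cv p a \/ cv q a.

Lemma isN_not_old a : isN a -> ~ old a.
Proof.
  intros H. apply in_map_iff in H. destruct H as [[s w] [E I]]. simpl in E. subst w.
  destruct (HP_fresh _ _ I). intros [X|X]; auto.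
Qed.

Lemma nd_M a : isN a -> Mnode (nd a) /\ fr (nd a) = a.
Proof.
  intros H. pose proof (nd_spec a H) as I. assert (M : Mnode (nd a)).
  { apply HP_M. apply in_map_iff. exists (nd a, a); auto. }
  split; auto. rewrite fr_M; auto. eapply in_pair_fun; eauto. apply fM_spec; auto.
Qed.

Lemma frM_isN s : Mnode s -> isN (fr s) /\ nd (fr s) = s.
Proof.
  intros M. rewrite fr_M; auto. pose proof (fM_spec s M) as I.
  assert (isN (fM s)) by (apply in_map_iff; exists (s, fM s); auto).
  split; auto. eapply in_pair_inj; eauto. apply nd_spec; auto.
Qed.

Lemma fr_old s : cu p s \/ cu q s -> old (fr s).
Proof.
  intros [H|H].
  - rewrite fr_p; auto. left. apply (c_fdom _ _ Hp s). apply fP_spec; auto.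
  - rewrite fr_q; auto. right. apply (c_fdom _ _ Hq s). apply fQ_spec; auto.
Qed.

Definition pi a := if excluded_middle_informative (cv p a) then a else tv a.
Lemma pi_p a : cv p a -> pi a = a.
Proof. intros H. unfold pi. destruct (excluded_middle_informative (cv p a)); auto; contradiction. Qed.
Lemma pi_q a : cv q a -> pi a = tv a.
Proof. intros H. unfold pi. destruct (excluded_middle_informative (cv p a)); auto. symmetry; auto. Qed.
Lemma pi_old a : old a -> cv p (pi a).
Proof. intros [H|H]. rewrite pi_p; auto. rewrite pi_q; auto. Qed.

Definition lep x y := x = y \/ clt p x y.
Lemma lep_trans x y z : lep x y -> lep y z -> lep x z.
Proof. intros [A|A] [B|B]; subst; unfold lep; auto. right; eapply (c_trans _ _ Hp); eauto. Qed.
Lemma lep_lt x y z : lep x y -> clt p y z -> clt p x z.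
Proof. intros [A|A] B; subst; auto. eapply (c_trans _ _ Hp); eauto. Qed.
Lemma lt_lep x y z : clt p x y -> lep y z -> clt p x z.
Proof. intros A [B|B]; subst; auto. eapply (c_trans _ _ Hp); eauto. Qed.

Definition root s := cu p s /\ cu q s.
Definition oldn s := cu p s \/ cu q s.

Lemma Lroot r s : root r -> oldn s -> sprefix r s -> clt p (fP r) (pi (fr s)).
Proof.
  intros [R1 R2] Hs Prs. destruct (classic (cu p s)) as [A|A].
  - rewrite fr_p, pi_p; auto.
    + eapply (c_femb _ _ Hp); eauto; apply fP_spec; auto.
    + apply (c_fdom _ _ Hp s); apply fP_spec; auto.
  - destruct Hs as [Hs|Hs]; [contradiction|]. rewrite fr_q, pi_q; auto.
    + rewrite (fPQ r R1 R2). rewrite <- (Htv_id (fQ r)).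
      * apply Htv_lt. eapply (c_femb _ _ Hq); eauto; apply fQ_spec; auto.
      * apply (c_fdom _ _ Hq r). apply fQ_spec; auto.
      * rewrite <- fPQ; auto. apply (c_fdom _ _ Hp r). apply fP_spec; auto.
    + apply (c_fdom _ _ Hq s); apply fQ_spec; auto.
Qed.

Definition Z a b :=
    (old a /\ old b /\ clt p (pi a) (pi b))
 \/ (old a /\ isN b /\ exists r, root r /\ sprefix r (nd b) /\ lep (pi a) (fP r))
 \/ (isN a /\ old b /\ exists s, oldn s /\ sprefix (nd a) s /\ lep (pi (fr s)) (pi b))
 \/ (isN a /\ isN b /\ (sprefix (nd a) (nd b) \/ exists s r, oldn s /\ root r /\
        sprefix (nd a) s /\ sprefix r (nd b) /\ lep (pi (fr s)) (fP r))).

Lemma old_or_N a : cvr a -> old a \/ isN a.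
Proof. intros [H|[H|H]]; unfold old; auto. Qed.

Lemma Z_trans a b c : Z a b -> Z b c -> Z a c.
Proof.
  intros Zab Zbc.
  destruct Zab as [[A1 [B1 L1]]|[[A1 [B1 [r [R1 [P1 L1]]]]]|[[A1 [B1 [s [S1 [P1 L1]]]]]|[A1 [B1 H1]]]]];
  destruct Zbc as [[A2 [B2 L2]]|[[A2 [B2 [r' [R2 [P2 L2]]]]]|[[A2 [B2 [s' [S2 [P2 L2]]]]]|[A2 [B2 H2]]]]];
  try (exfalso; apply (isN_not_old b); auto; fail).
  - left. split; [auto|split; [auto|]]. eapply (c_trans _ _ Hp); eauto.
  - right; left. split; [auto|split; [auto|]]. exists r'. split; [auto|split; [auto|]].
    right. eapply lt_lep; eauto.
  - left. split; [auto|split; [auto|]]. eapply lep_lt; [eauto|]. eapply lt_lep; [|eauto].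
    apply Lroot; auto. eapply sprefix_trans; eauto.
  - right; left. split; [auto|split; [auto|]]. destruct H2 as [H2|[s' [r' [S2 [R2 [P2 [P3 L2]]]]]]].
    + exists r. split; [auto|split; [|auto]]. eapply sprefix_trans; eauto.
    + exists r'. split; [auto|split; [auto|]]. right. eapply lep_lt; [eauto|]. eapply lt_lep; [|eauto].
      apply Lroot; auto. eapply sprefix_trans; eauto.
  - right; right; left. split; [auto|split; [auto|]]. exists s. split; [auto|split; [auto|]].
    right. eapply lep_lt; eauto.
  - right; right; right. split; [auto|split; [auto|]]. right. exists s, r'.
    split; [auto|split; [auto|split; [auto|split; [auto|]]]]. eapply lep_trans; eauto.
  - right; right; left. split; [auto|split; [auto|]]. destruct H1 as [H1|[s [r [S1 [R1 [P1 [P3 L1]]]]]]].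
    + exists s'. split; [auto|split; [|auto]]. eapply sprefix_trans; eauto.
    + exists s. split; [auto|split; [auto|]]. right. eapply lep_lt; [eauto|]. eapply lt_lep; [|eauto].
      apply Lroot; auto. eapply sprefix_trans; eauto.
  - right; right; right. split; [auto|split; [auto|]].
    destruct H1 as [H1|[s [r [S1 [R1 [P1 [P3 L1]]]]]]];
    destruct H2 as [H2|[s' [r' [S2 [R2 [P2 [P4 L2]]]]]]].
    + left. eapply sprefix_trans; eauto.
    + right. exists s', r'. split; [auto|split; [auto|split; [|split; [auto|auto]]]]. eapply sprefix_trans; eauto.
    + right. exists s, r. split; [auto|split; [auto|split; [auto|split; [|auto]]]]. eapply sprefix_trans; eauto.
    + right. exists s, r'. split; [auto|split; [auto|split; [auto|split; [auto|]]]].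
      right. eapply lep_lt; [eauto|]. eapply lt_lep; [|eauto].
      apply Lroot; auto. eapply sprefix_trans; eauto.
Qed.

Lemma Z_irr a : ~ Z a a.
Proof.
  intros [[A1 [B1 L1]]|[[A1 [B1 _]]|[[A1 [B1 _]]|[A1 [B1 H1]]]]].
  - apply (c_irr _ _ Hp _ L1).
  - apply (isN_not_old a); auto.
  - apply (isN_not_old a); auto.
  - destruct H1 as [H1|[s [r [S1 [R1 [P1 [P3 L1]]]]]]].
    + apply (sprefix_irr _ H1).
    + assert (X : clt p (fP r) (pi (fr s))) by (apply Lroot; auto; eapply sprefix_trans; eauto).
      apply (c_irr _ _ Hp (fP r)). eapply lt_lep; eauto.
Qed.

Lemma ccr_old a c : old a -> ccr a c -> cc p (pi a) c /\ c < c0.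
Proof.
  intros O [H|[H|[H _]]].
  - split; [|apply (Hc0 a); auto]. rewrite pi_p; auto. apply (c_cdom _ _ Hp _ _ H).
  - split; [|apply (Hc0 a); auto]. rewrite pi_q; auto. apply (c_cdom _ _ Hq _ _ H).
  - exfalso. apply (isN_not_old a); auto.
Qed.

Lemma ccr_new a c : isN a -> ccr a c -> c = c0 + pos a (map snd P).
Proof.
  intros N [H|[H|[_ H]]]; auto; exfalso; apply (isN_not_old a N).
  - left. apply (c_cdom _ _ Hp _ _ H).
  - right. apply (c_cdom _ _ Hq _ _ H).
Qed.

Lemma Z_col a b c d : Z a b -> ccr a c -> ccr b d -> c <> d.
Proof.
  intros Zab Ca Cb. pose proof (Z_irr a) as Irr.
  destruct Zab as [[A1 [B1 L1]]|[[A1 [B1 _]]|[[A1 [B1 _]]|[A1 [B1 H1]]]]].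
  - destruct (ccr_old _ _ A1 Ca), (ccr_old _ _ B1 Cb). eapply (c_ccol _ _ Hp); eauto.
  - destruct (ccr_old _ _ A1 Ca). rewrite (ccr_new _ _ B1 Cb). lia.
  - destruct (ccr_old _ _ B1 Cb). rewrite (ccr_new _ _ A1 Ca). lia.
  - rewrite (ccr_new _ _ A1 Ca), (ccr_new _ _ B1 Cb). intros E.
    assert (pos a (map snd P) = pos b (map snd P)) by lia.
    assert (a = b) by (eapply pos_inj; eauto). subst b.
    apply Irr. right; right; right. auto.
Qed.

Lemma Base_Z a b : BaseR a b -> Z a b.
Proof.
  intros [H|[H|[s [t [Pst [[Cs Es] [Ct Et]]]]]]].
  - destruct (c_ltv _ _ Hp _ _ H). left. unfold old. rewrite !pi_p; auto.
  - destruct (c_ltv _ _ Hq _ _ H). left. unfold old. rewrite !pi_q; auto.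
  - subst a b. apply cur_cases in Cs. apply cur_cases in Ct.
    destruct (classic (oldn s)) as [Os|Os]; destruct (classic (oldn t)) as [Ot|Ot].
    + left. split; [apply fr_old; auto|]. split; [apply fr_old; auto|].
      destruct (old_split s t Os Ot (proj1 Pst)) as [[X Y]|[X Y]].
      * rewrite !fr_p, !pi_p; auto.
        -- eapply (c_femb _ _ Hp); eauto; apply fP_spec; auto.
        -- apply (c_fdom _ _ Hp t); apply fP_spec; auto.
        -- apply (c_fdom _ _ Hp s); apply fP_spec; auto.
      * rewrite !fr_q, !pi_q; auto.
        -- apply Htv_lt. eapply (c_femb _ _ Hq); eauto; apply fQ_spec; auto.
        -- apply (c_fdom _ _ Hq t); apply fQ_spec; auto.
        -- apply (c_fdom _ _ Hq s); apply fQ_spec; auto.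
    + assert (Mt : Mnode t) by (unfold oldn in Ot; tauto).
      destruct (frM_isN t Mt) as [N1 N2].
      right; left. split; [apply fr_old; auto|]. split; auto.
      destruct (Mnode_below s t Mt Os (proj1 Pst)) as [R1 R2].
      exists s. split. split; auto. split. rewrite N2; auto. left. rewrite fr_p, pi_p; auto.
      apply (c_fdom _ _ Hp s); apply fP_spec; auto.
    + assert (Ms : Mnode s) by (unfold oldn in Os; tauto).
      destruct (frM_isN s Ms) as [N1 N2].
      right; right; left. split; auto. split; [apply fr_old; auto|].
      exists t. split; auto. split. rewrite N2; auto. left; auto.
    + assert (Ms : Mnode s) by (unfold oldn in Os; tauto).
      assert (Mt : Mnode t) by (unfold oldn in Ot; tauto).
      destruct (frM_isN s Ms) as [N1 N2]. destruct (frM_isN t Mt) as [N3 N4].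
      right; right; right. split; auto. split; auto. left. rewrite N2, N4; auto.
Qed.

Lemma cltr_Z a b : cltr a b -> Z a b.
Proof. induction 1. apply Base_Z; auto. eapply Z_trans; eauto. Qed.

Lemma seqp s : cu p s -> is_seq lt s. Proof. intros H. apply (c_seq _ _ Hp s HT H). Qed.
Lemma seqq s : cu q s -> is_seq lt s. Proof. intros H. apply (c_seq _ _ Hq s HT H). Qed.

Lemma cur_seq s : cur s -> is_seq lt s.
Proof.
  intros [H|[H|[e [n [A [B E]]]]]]. apply seqp; auto. apply seqq; auto. subst. apply meet_seq. apply seqp; auto.
Qed.

Lemma cur_meet_p s t : cur s -> cu p t -> cur (meet s t).
Proof.
  intros Hs Ht. destruct Hs as [Hs|[Hs|[e [n [A [B E]]]]]].
  - left. apply (c_meet_closed _ _ Hp); auto.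
  - right; right. exists t, s. repeat split; auto. apply meet_sym.
  - subst s. destruct (meet3 e n t (seqp e A) (seqq n B) (seqp t Ht)) as [X|X]; rewrite X.
    + right; right. exists e, n. auto.
    + left. apply (c_meet_closed _ _ Hp); auto.
Qed.

Lemma cur_meet_q s t : cur s -> cu q t -> cur (meet s t).
Proof.
  intros Hs Ht. destruct Hs as [Hs|[Hs|[e [n [A [B E]]]]]].
  - right; right. exists s, t. auto.
  - right; left. apply (c_meet_closed _ _ Hq); auto.
  - subst s. rewrite (meet_sym e n).
    destruct (meet3 n e t (seqq n B) (seqp e A) (seqq t Ht)) as [X|X]; rewrite X.
    + right; right. exists e, n. rewrite meet_sym. auto.
    + right; left. apply (c_meet_closed _ _ Hq); auto.
Qed.

Lemma cur_meet s t : cur s -> cur t -> cur (meet s t).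
Proof.
  intros Hs Ht. destruct Ht as [Ht|[Ht|[e [n [A [B E]]]]]].
  - apply cur_meet_p; auto.
  - apply cur_meet_q; auto.
  - subst t. rewrite meet_sym.
    destruct (meet3 e n s (seqp e A) (seqq n B) (cur_seq s Hs)) as [X|X]; rewrite X.
    + right; right. exists e, n. auto.
    + rewrite meet_sym. apply cur_meet_p; auto.
Qed.

Lemma fr_cvr s : cur s -> cvr (fr s).
Proof.
  intros H. apply cur_cases in H. destruct (classic (oldn s)) as [O|O].
  - destruct (fr_old s O) as [X|X]; unfold cvr; auto.
  - assert (M : Mnode s) by (unfold oldn in O; tauto). right; right. apply (frM_isN s M).
Qed.

Lemma rr_cond : is_cond lt T rr.
Proof.
  unfold is_cond; simpl.
  split; [|split; [|split; [|split; [|split; [|split; [|split; [|split; [|split; [|split; [|split;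
    [|split; [|split; [|split; [|split; [|split; [|split]]]]]]]]]]]]]]]].
  - intros s [H|[H|[e [n [A [B E]]]]]]. apply (c_T _ _ Hp); auto. apply (c_T _ _ Hq); auto.
    subst. apply meet_T; auto. apply (c_T _ _ Hp); auto.
  - apply finite_union. apply (c_finu _ _ Hp). apply finite_union. apply (c_finu _ _ Hq).
    apply finite_image2. apply (c_finu _ _ Hp). apply (c_finu _ _ Hq).
  - apply finite_union. apply (c_finv _ _ Hp). apply finite_union. apply (c_finv _ _ Hq).
    exists (map snd P). intros; unfold isN; tauto.
  - left. apply (c_empty _ _ Hp).
  - intros s t Hs Ht. exists (meet s t). split. apply meet_is. apply cur_meet; auto.
  - intros a b H. induction H as [a b H|a b c _ [IH1 _] _ [_ IH2]]; auto.
    destruct H as [H|[H|[s [t [_ [[Cs Es] [Ct Et]]]]]]].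
    + destruct (c_ltv _ _ Hp _ _ H). unfold cvr; auto.
    + destruct (c_ltv _ _ Hq _ _ H). unfold cvr; auto.
    + subst. split; apply fr_cvr; auto.
  - intros a H. apply (Z_irr a). apply cltr_Z; auto.
  - intros a b d H1 H2. eapply t_trans; eauto.
  - intros s a [H E]. subst. split; auto. apply fr_cvr; auto.
  - intros s a b [_ E1] [_ E2]. congruence.
  - intros s H. exists (fr s). split; auto.
  - intros a [H|[H|H]].
    + destruct (c_fsurj _ _ Hp a H) as [s Hs]. exists s. destruct (c_fdom _ _ Hp _ _ Hs).
      split. left; auto. rewrite fr_p; auto. eapply (c_ffun _ _ Hp); eauto. apply fP_spec; auto.
    + destruct (c_fsurj _ _ Hq a H) as [s Hs]. exists s. destruct (c_fdom _ _ Hq _ _ Hs).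
      split. right; left; auto. rewrite fr_q; auto. eapply (c_ffun _ _ Hq); eauto. apply fQ_spec; auto.
    + destruct (nd_M a H) as [M E]. exists (nd a). split; auto. right; right. apply M.
  - intros s t a b P1 H1 H2. apply t_step. right; right. exists s, t. auto.
  - intros s a [H E] l Hl. subst a. apply cur_cases in H. destruct H as [H|[H|H]].
    + rewrite fr_p; auto. eapply (c_ht _ _ Hp); eauto. apply fP_spec; auto.
    + rewrite fr_q; auto. eapply (c_ht _ _ Hq); eauto. apply fQ_spec; auto.
    + rewrite fr_M; auto. rewrite <- (lg_eq s l Hl). apply HP_ht. apply fM_spec; auto.
  - intros a n [H|[H|[H _]]]; unfold cvr; auto.
    + left. apply (c_cdom _ _ Hp _ _ H).
    + right; left. apply (c_cdom _ _ Hq _ _ H).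
  - intros a n k H1 H2. destruct (classic (isN a)) as [N|N].
    + rewrite (ccr_new _ _ N H1), (ccr_new _ _ N H2). auto.
    + destruct H1 as [H1|[H1|[H1 _]]]; [| |contradiction];
      destruct H2 as [H2|[H2|[H2 _]]]; try contradiction.
      * apply (c_cfun _ _ Hp a); auto.
      * pose proof (c_cdom _ _ Hp _ _ H1). pose proof (c_cdom _ _ Hq _ _ H2).
        apply Htv_cc in H2. rewrite Htv_id in H2; auto. apply (c_cfun _ _ Hp a); auto.
      * pose proof (c_cdom _ _ Hq _ _ H1). pose proof (c_cdom _ _ Hp _ _ H2).
        apply Htv_cc in H1. rewrite Htv_id in H1; auto. apply (c_cfun _ _ Hp a); auto.
      * apply (c_cfun _ _ Hq a); auto.
  - intros a [H|[H|H]].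
    + destruct (c_ctot _ _ Hp a H) as [n Hn]. exists n. left; auto.
    + destruct (c_ctot _ _ Hq a H) as [n Hn]. exists n. right; left; auto.
    + exists (c0 + pos a (map snd P)). right; right; auto.
  - intros a b n k H1 H2 H3. eapply Z_col; eauto. apply cltr_Z; auto.
Qed.

Lemma rr_p : cle p rr.
Proof.
  unfold cle; simpl. split; [|split; [|split; [|split]]].
  - intros s H. left; auto.
  - intros a H. left; auto.
  - intros a b H. apply t_step. left; auto.
  - intros s a H. destruct (c_fdom _ _ Hp _ _ H). split. left; auto.
    rewrite fr_p; auto. eapply (c_ffun _ _ Hp); eauto. apply fP_spec; auto.
  - intros a n H. left; auto.
Qed.

Lemma rr_q : cle q rr.
Proof.
  unfold cle; simpl. split; [|split; [|split; [|split]]].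
  - intros s H. right; left; auto.
  - intros a H. right; left; auto.
  - intros a b H. apply t_step. right; left; auto.
  - intros s a H. destruct (c_fdom _ _ Hq _ _ H). split. right; left; auto.
    rewrite fr_q; auto. eapply (c_ffun _ _ Hq); eauto. apply fQ_spec; auto.
  - intros a n H. right; left; auto.
Qed.

End Amalg.
Lemma le_list_max x l : In x l -> x <= list_max l.
Proof. induction l; simpl; [tauto|]. intros [E|H]; [subst; lia|]. specialize (IHl H). lia. Qed.

Lemma fresh_pairs (L : list (sq W)) (U : list W) : NoDup L ->
  exists P, map fst P = L /\ NoDup (map snd P) /\
    forall s w, In (s, w) P -> ht_rel lt w (lg s) /\ ~ In w U.
Proof.
  revert U. induction L as [|a L IH]; intros U N.
  - exists []. simpl. split; [auto|split; [constructor|]]. intros s w H; destruct H.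
  - inversion N as [|? ? Na Nl]; subst.
    destruct (level_fresh (lg a) U) as [w [Hw1 Hw2]].
    destruct (IH (w :: U) Nl) as [P [E1 [E2 E3]]].
    exists ((a, w) :: P). simpl. rewrite E1. split; auto. split.
    + constructor; auto. intros I. apply in_map_iff in I. destruct I as [[s0 w0] [E I]]. simpl in E. subst w0.
      apply (proj2 (E3 _ _ I)). left; auto.
    + intros s w' [E|I].
      * inversion E; subst. auto.
      * destruct (E3 _ _ I) as [X Y]. split; auto. intros Z. apply Y. right; auto.
Qed.

Lemma amalg (T : sq W -> Prop) (HT : is_tree lt T) (p q : cond W)
  (Hp : is_cond lt T p) (Hq : is_cond lt T q) (tv : W -> W)
  (Htv_id : forall a, cv q a -> cv p a -> tv a = a)
  (Htv_lt : forall a b, clt q a b -> clt p (tv a) (tv b))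
  (Htv_cc : forall a c, cc q a c -> cc p (tv a) c)
  (Hroot : forall s a, cu p s -> cu q s -> cf q s a -> cf p s a)
  (Hcross : forall s t, cu p s -> ~ cu q s -> cu q t -> ~ cu p t -> ~ prefix s t /\ ~ prefix t s) :
  compatible lt T p q.
Proof.
  assert (FM : finite (Mnode p q)).
  { apply finite_sub with (P := fun z => exists a b, cu p a /\ cu q b /\ z = meet a b).
    apply finite_image2. apply (c_finu _ _ Hp). apply (c_finu _ _ Hq).
    intros s [H _]. auto. }
  destruct (finite_nodup _ _ FM) as [LM [NLM HLM]].
  destruct (c_finv _ _ Hp) as [LVp HLVp]. destruct (c_finv _ _ Hq) as [LVq HLVq].
  destruct (fresh_pairs LM (LVp ++ LVq) NLM) as [P [E1 [E2 E3]]].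
  set (cP := fun a => epsilon (inhabits 0) (cc p a)).
  set (cQ := fun a => epsilon (inhabits 0) (cc q a)).
  set (c0 := S (list_max (map cP LVp ++ map cQ LVq))).
  assert (Hc0 : forall a c, cc p a c \/ cc q a c -> c < c0).
  { intros a c [H|H]; unfold c0; apply Nat.lt_succ_r; apply le_list_max; apply in_app_iff.
    - left. apply in_map_iff. exists a. split.
      + unfold cP. symmetry. apply (c_cfun _ _ Hp a); auto. apply (epsilon_spec (inhabits 0) (cc p a)). eauto.
      + apply HLVp. apply (c_cdom _ _ Hp _ _ H).
    - right. apply in_map_iff. exists a. split.
      + unfold cQ. symmetry. apply (c_cfun _ _ Hq a); auto. apply (epsilon_spec (inhabits 0) (cc q a)). eauto.
      + apply HLVq. apply (c_cdom _ _ Hq _ _ H). }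
  exists (rr p q P c0). split; [|split].
  - apply (rr_cond T HT p q Hp Hq tv Htv_id Htv_lt Htv_cc Hroot Hcross P); auto.
    + rewrite E1; auto.
    + intros s. rewrite E1. apply HLM.
    + intros s w H. apply (E3 s w H).
    + intros s w H. destruct (E3 s w H) as [_ X]. split; intros Y; apply X; apply in_app_iff.
      left; apply HLVp; auto. right; apply HLVq; auto.
  - apply (rr_p T); auto.
  - eapply (rr_q T); eauto.
Qed.
Definition stable {X Y} (J : X -> Prop) (g : X -> Y) :=
  (exists c, forall x, J x -> g x = c) \/ (forall y, countable (fun x => J x /\ g x = y)).

Lemma stable_mono {X Y} (J J' : X -> Prop) (g : X -> Y) :
  (forall x, J' x -> J x) -> stable J g -> stable J' g.
Proof.
  intros H [[c Hc]|Hc]; [left; exists c; auto|right]. intros y.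
  apply cnt_sub with (A := fun x => J x /\ g x = y); [firstorder|auto].
Qed.

Lemma stab_one {X Y} (J : X -> Prop) (g : X -> Y) : ~ countable J ->
  exists J', (forall x, J' x -> J x) /\ ~ countable J' /\ stable J' g.
Proof.
  intros HJ. destruct (classic (exists y, ~ countable (fun x => J x /\ g x = y))) as [[y Hy]|N].
  - exists (fun x => J x /\ g x = y). split; [firstorder|split; auto]. left. exists y. firstorder.
  - exists J. split; auto. split; auto. right. intros y. apply NNPP. intros N2. apply N. eauto.
Qed.

Lemma stab_list {X Y} (L : list (X -> Y)) (J : X -> Prop) : ~ countable J ->
  exists J', (forall x, J' x -> J x) /\ ~ countable J' /\ forall g, In g L -> stable J' g.
Proof.
  revert J. induction L as [|g L IH]; intros J HJ.
  - exists J. simpl. split; [auto|split; [auto|tauto]].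
  - destruct (stab_one J g HJ) as [J1 [S1 [U1 T1]]]. destruct (IH J1 U1) as [J2 [S2 [U2 T2]]].
    exists J2. split; auto. split; auto. intros h [E|I]; auto. subst h. eapply stable_mono; eauto.
Qed.

Lemma stable_nat {X} (J : X -> Prop) (g : X -> nat) : ~ countable J -> stable J g ->
  exists c, forall x, J x -> g x = c.
Proof.
  intros HJ [H|H]; auto. exfalso. destruct (pigeon_nat J g HJ) as [n Hn]. apply Hn; auto.
Qed.

Lemma ultra_union {X I} (U : (X -> Prop) -> Prop)
  (UI : forall A B, U A -> U B -> U (fun x => A x /\ B x))
  (US : forall A B : X -> Prop, (forall x, A x -> B x) -> U A -> U B)
  (UE : forall A, U A -> exists x, A x)
  (UC : forall A, U A \/ U (fun x => ~ A x))
  (l : list I) (S : I -> X -> Prop) (B : X -> Prop) :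
  U B -> (forall x, B x -> exists i, In i l /\ S i x) -> exists i, In i l /\ U (S i).
Proof.
  revert B. induction l as [|a l IH]; intros B HB Hcov.
  - destruct (UE B HB) as [x Bx]. destruct (Hcov x Bx) as [i [[] _]].
  - destruct (UC (S a)) as [H|H]; [exists a; simpl; auto|].
    destruct (IH (fun x => B x /\ ~ S a x)) as [i [Ii Ui]].
    + apply UI; auto.
    + intros x [Bx Nx]. destruct (Hcov x Bx) as [i [[E|Ii] Si]]; [subst; contradiction|eauto].
    + exists i. simpl; auto.
Qed.
Definition w0 : W := epsilon W_inh (fun _ => True).
Definition LU (p : cond W) : list (sq W) :=
  match excluded_middle_informative (finite (cu p)) with
  | left H => proj1_sig (constructive_indefinite_description _ (finite_nodup _ _ H)) | right _ => [] end.
Definition LV (p : cond W) : list W :=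
  match excluded_middle_informative (finite (cv p)) with
  | left H => proj1_sig (constructive_indefinite_description _ (finite_nodup _ _ H)) | right _ => [] end.
Lemma LU_spec p : finite (cu p) -> NoDup (LU p) /\ forall s, cu p s <-> In s (LU p).
Proof.
  intros H. unfold LU. destruct (excluded_middle_informative _) as [H'|H']; [|contradiction].
  exact (proj2_sig (constructive_indefinite_description _ (finite_nodup _ _ H'))).
Qed.
Lemma LV_spec p : finite (cv p) -> NoDup (LV p) /\ forall a, cv p a <-> In a (LV p).
Proof.
  intros H. unfold LV. destruct (excluded_middle_informative _) as [H'|H']; [|contradiction].
  exact (proj2_sig (constructive_indefinite_description _ (finite_nodup _ _ H'))).
Qed.
Definition uu (i : nat) (p : cond W) : sq W := nth i (LU p) (@empty_seq W).
Definition vv (k : nat) (p : cond W) : W := nth k (LV p) w0.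
Definition fv (p : cond W) (s : sq W) : W := epsilon W_inh (cf p s).
Definition Alt (k l : nat) (p : cond W) : nat :=
  if excluded_middle_informative (clt p (vv k p) (vv l p)) then 1 else 0.
Definition Acol (k : nat) (p : cond W) : nat := epsilon (inhabits 0) (cc p (vv k p)).
Definition Af (i : nat) (p : cond W) : nat := pos (fv p (uu i p)) (LV p).

Section Final.
Variable T : sq W -> Prop.
Hypothesis HT : is_tree lt T.
Hypothesis Hnb : no_uncountable_branch T.
Variable J : cond W -> Prop.
Variables n m : nat.
Hypothesis HJc : forall x, J x -> is_cond lt T x.
Hypothesis HJn : forall x, J x -> length (LU x) = n.
Hypothesis HJm : forall x, J x -> length (LV x) = m.
Hypothesis HJu : forall i, i < n -> stable J (uu i).
Hypothesis HJv : forall k, k < m -> stable J (vv k).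
Hypothesis HJlt : forall k l x y, k < m -> l < m -> J x -> J y ->
  clt x (vv k x) (vv l x) -> clt y (vv k y) (vv l y).
Hypothesis HJcol : forall k x y, k < m -> J x -> J y -> Acol k x = Acol k y.
Hypothesis HJf : forall i x y, i < n -> J x -> J y -> Af i x = Af i y.
Hypothesis HJunc : ~ countable J.

Lemma LU_ok x : J x -> NoDup (LU x) /\ forall s, cu x s <-> In s (LU x).
Proof. intros H. apply LU_spec. apply (c_finu _ _ (HJc x H)). Qed.
Lemma LV_ok x : J x -> NoDup (LV x) /\ forall a, cv x a <-> In a (LV x).
Proof. intros H. apply LV_spec. apply (c_finv _ _ (HJc x H)). Qed.

Lemma uu_in x i : J x -> i < n -> cu x (uu i x).
Proof. intros H L. apply (LU_ok x H). unfold uu. apply nth_In. rewrite HJn; auto. Qed.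
Lemma vv_in x k : J x -> k < m -> cv x (vv k x).
Proof. intros H L. apply (LV_ok x H). unfold vv. apply nth_In. rewrite HJm; auto. Qed.
Lemma cu_uu x s : J x -> cu x s -> exists i, i < n /\ uu i x = s.
Proof.
  intros H C. apply (LU_ok x H) in C. exists (pos s (LU x)). split.
  rewrite <- (HJn x H). apply pos_lt; auto. apply nth_pos; auto.
Qed.
Lemma cv_vv x a : J x -> cv x a -> pos a (LV x) < m /\ vv (pos a (LV x)) x = a.
Proof.
  intros H C. apply (LV_ok x H) in C. split.
  rewrite <- (HJm x H). apply pos_lt; auto. apply nth_pos; auto.
Qed.
Lemma uu_inj x i j : J x -> i < n -> j < n -> uu i x = uu j x -> i = j.
Proof.
  intros H Li Lj E. destruct (LU_ok x H) as [N _]. eapply NoDup_nth; eauto; rewrite HJn; auto.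
Qed.

Definition rootu i := exists c, forall x, J x -> uu i x = c.
Definition rootv k := exists c, forall x, J x -> vv k x = c.
Lemma freeu_cnt i y : i < n -> ~ rootu i -> countable (fun x => J x /\ uu i x = y).
Proof. intros L N. destruct (HJu i L) as [H|H]; [contradiction|auto]. Qed.
Lemma freev_cnt k y : k < m -> ~ rootv k -> countable (fun x => J x /\ vv k x = y).
Proof. intros L N. destruct (HJv k L) as [H|H]; [contradiction|auto]. Qed.
Lemma rootu_eq i x y : rootu i -> J x -> J y -> uu i x = uu i y.
Proof. intros [c H] A B. rewrite (H x A), (H y B); auto. Qed.
Lemma rootv_eq k x y : rootv k -> J x -> J y -> vv k x = vv k y.
Proof. intros [c H] A B. rewrite (H x A), (H y B); auto. Qed.

Lemma fv_spec x s : J x -> cu x s -> cf x s (fv x s).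
Proof. intros H C. apply (epsilon_spec W_inh (cf x s)). apply (c_ftot _ _ (HJc x H)); auto. Qed.
Lemma Af_spec x i : J x -> i < n -> Af i x < m /\ vv (Af i x) x = fv x (uu i x).
Proof.
  intros H L. unfold Af. apply cv_vv; auto. eapply (c_fdom _ _ (HJc x H)). apply fv_spec; auto.
  apply uu_in; auto.
Qed.
Lemma Acol_spec x k : J x -> k < m -> cc x (vv k x) (Acol k x).
Proof.
  intros H L. unfold Acol. apply (epsilon_spec (inhabits 0) (cc x (vv k x))).
  apply (c_ctot _ _ (HJc x H)). apply vv_in; auto.
Qed.

Lemma K1 i x : i < n -> rootu i -> J x -> rootv (Af i x).
Proof.
  intros L [c Hc] Jx. set (k := Af i x). apply NNPP. intros N.
  assert (Hk : forall y, J y -> vv k y = fv y c /\ ht_rel lt (vv k y) (lg c)).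
  { intros y Jy. unfold k. rewrite (HJf i x y L Jx Jy). destruct (Af_spec y i Jy L) as [_ E].
    rewrite E, (Hc y Jy). split; auto. assert (Cy : cu y c) by (rewrite <- (Hc y Jy); apply uu_in; auto).
    eapply (c_ht _ _ (HJc y Jy)). apply fv_spec; auto. apply lg_spec. apply (c_seq _ _ (HJc y Jy) c HT Cy). }
  destruct (pigeon_cnt J (fun a => ht_rel lt a (lg c)) (vv k) HJunc (level_cnt (lg c))) as [a [_ Ha]].
  { intros y Jy. apply (Hk y Jy). }
  apply Ha. apply freev_cnt; auto. unfold k. apply Af_spec; auto.
Qed.

Lemma Good a x : J a -> J x ->
  (forall j s, j < n -> ~ rootu j -> cu a s -> uu j x <> s) ->
  (forall k b, k < m -> ~ rootv k -> cv a b -> vv k x <> b) ->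
  (forall i j, i < n -> j < n -> ~ rootu i -> ~ rootu j ->
      ~ prefix (uu i a) (uu j x) /\ ~ prefix (uu j x) (uu i a)) ->
  compatible lt T a x.
Proof.
  intros Ja Jx D1 D2 C.
  pose proof (HJc a Ja) as Ca. pose proof (HJc x Jx) as Cx.
  apply (amalg T HT a x Ca Cx (fun b => vv (pos b (LV x)) a)).
  - intros b Hx Ha. destruct (cv_vv x b Jx Hx) as [L E].
    destruct (classic (rootv (pos b (LV x)))) as [R|R].
    + rewrite (rootv_eq _ a x R Ja Jx). auto.
    + exfalso. apply (D2 _ b L R Ha E).
  - intros b d H. destruct (c_ltv _ _ Cx _ _ H) as [Hb Hd].
    destruct (cv_vv x b Jx Hb) as [L1 E1]. destruct (cv_vv x d Jx Hd) as [L2 E2].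
    apply (HJlt _ _ x a L1 L2 Jx Ja). rewrite E1, E2. auto.
  - intros b c H. pose proof (c_cdom _ _ Cx _ _ H) as Hb. destruct (cv_vv x b Jx Hb) as [L E].
    assert (c = Acol (pos b (LV x)) x).
    { apply (c_cfun _ _ Cx b); auto. rewrite <- E at 1. apply Acol_spec; auto. }
    subst c. rewrite (HJcol _ x a L Jx Ja). apply Acol_spec; auto.
  - intros s b Ha Hx Hf. destruct (cu_uu x s Jx Hx) as [j [Lj Ej]].
    destruct (classic (rootu j)) as [R|R]; [|exfalso; apply (D1 j s Lj R Ha Ej)].
    assert (Es : uu j a = s) by (rewrite (rootu_eq j a x R Ja Jx); auto).
    assert (b = fv x s) by (eapply (c_ffun _ _ Cx); eauto; apply fv_spec; auto).
    subst b. destruct (Af_spec x j Jx Lj) as [L1 E1]. destruct (Af_spec a j Ja Lj) as [L2 E2].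
    pose proof (K1 j x Lj R Jx) as RV. rewrite (HJf j a x Lj Ja Jx) in E2.
    rewrite (rootv_eq _ a x RV Ja Jx), E1, Ej in E2. rewrite Es in E2. rewrite E2. apply fv_spec; auto.
  - intros s t Has Nxs Hxt Nat. destruct (cu_uu a s Ja Has) as [i [Li Ei]].
    destruct (cu_uu x t Jx Hxt) as [j [Lj Ej]]. subst s t.
    assert (Ri : ~ rootu i) by (intros R; apply Nxs; rewrite (rootu_eq i a x R Ja Jx); apply uu_in; auto).
    assert (Rj : ~ rootu j) by (intros R; apply Nat; rewrite (rootu_eq j x a R Jx Ja); apply uu_in; auto).
    apply C; auto.
Qed.

Definition Bad a x :=
  (exists j s, j < n /\ ~ rootu j /\ cu a s /\ uu j x = s) \/
  (exists k b, k < m /\ ~ rootv k /\ cv a b /\ vv k x = b) \/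
  (exists i j, i < n /\ j < n /\ ~ rootu i /\ ~ rootu j /\ prefix (uu j x) (uu i a)).

Lemma atom_cnt j y : countable (fun x => J x /\ ~ rootu j /\ j < n /\ uu j x = y).
Proof.
  destruct (classic (rootu j /\ True)) as [[R _]|R].
  - apply cnt_empty. intros x [_ [N _]]. contradiction.
  - destruct (Nat.lt_ge_cases j n) as [L|L].
    + apply cnt_sub with (A := fun x => J x /\ uu j x = y); [tauto|]. apply freeu_cnt; [auto|intros X; apply R; auto].
    + apply cnt_empty. intros x [_ [_ [L2 _]]]. lia.
Qed.

Lemma atomv_cnt k y : countable (fun x => J x /\ ~ rootv k /\ k < m /\ vv k x = y).
Proof.
  destruct (classic (rootv k /\ True)) as [[R _]|R].
  - apply cnt_empty. intros x [_ [N _]]. contradiction.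
  - destruct (Nat.lt_ge_cases k m) as [L|L].
    + apply cnt_sub with (A := fun x => J x /\ vv k x = y); [tauto|]. apply freev_cnt; [auto|intros X; apply R; auto].
    + apply cnt_empty. intros x [_ [_ [L2 _]]]. lia.
Qed.

Lemma Bad_cnt a : J a -> countable (fun x => J x /\ Bad a x).
Proof.
  intros Ja.
  set (B1 := fun x => exists j, j < n /\ exists s, In s (LU a) /\ (J x /\ ~ rootu j /\ j < n /\ uu j x = s)).
  set (B2 := fun x => exists k, k < m /\ exists b, In b (LV a) /\ (J x /\ ~ rootv k /\ k < m /\ vv k x = b)).
  set (B3 := fun x => exists i, i < n /\ exists j, j < n /\ exists s, (T s /\ prefix s (uu i a)) /\
                      (J x /\ ~ rootu j /\ j < n /\ uu j x = s)).
  apply cnt_sub with (A := fun x => B1 x \/ (B2 x \/ B3 x)).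
  - intros x [Jx [[j [s [L [R [C E]]]]]|[[k [b [L [R [C E]]]]]|[i [j [Li [Lj [Ri [Rj P]]]]]]]]].
    + left. exists j. split; auto. exists s. split. apply (LU_ok a Ja); auto. auto.
    + right; left. exists k. split; auto. exists b. split. apply (LV_ok a Ja); auto. auto.
    + right; right. exists i. split; auto. exists j. split; auto. exists (uu j x). split; auto.
      split; auto. apply (c_T _ _ (HJc x Jx)). apply uu_in; auto.
  - apply cnt_union2; [|apply cnt_union2].
    + apply cnt_union_seq. intros j _. apply cnt_union_list. intros s _. apply atom_cnt.
    + apply cnt_union_seq. intros k _. apply cnt_union_list. intros b _. apply atomv_cnt.
    + apply cnt_union_seq. intros i Li. apply cnt_union_seq. intros j _.
      apply cnt_union. apply pred_cnt; auto. apply (c_seq _ _ (HJc a Ja)); auto. apply uu_in; auto.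
      intros s _. apply atom_cnt.
Qed.

Lemma KL (Hanti : forall a x, J a -> J x -> a <> x -> ~ compatible lt T a x) : False.
Proof.
  set (F := fun B : cond W -> Prop => exists C, countable C /\ forall x, J x -> ~ C x -> B x).
  destruct (UFM.ultra_exists_mc (cond W) F) as [U [UF [UI [US [UE UC]]]]].
  - exists (fun _ => False). split. apply cnt_empty; auto. auto.
  - intros A1 A2 [C1 [H1 K1]] [C2 [H2 K2]]. exists (fun x => C1 x \/ C2 x). split.
    apply cnt_union2; auto. intros x Jx N. split; [apply K1|apply K2]; auto.
  - intros A1 A2 S [C [H K]]. exists C. split; auto.
  - intros A1 [C [H K]]. destruct (uncnt_ne _ (uncnt_minus J C HJunc H)) as [x [Jx Nx]]. eauto.
  - set (L := list_prod (seq 0 n) (seq 0 n)).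
    set (S := fun a (ij : nat * nat) x => ~ rootu (fst ij) /\ ~ rootu (snd ij) /\
                  prefix (uu (fst ij) a) (uu (snd ij) x)).
    assert (HS : forall a, J a -> exists ij, In ij L /\ U (S a ij)).
    { intros a Ja. apply (ultra_union U UI US UE UC L (S a) (fun x => J x /\ ~ Bad a x /\ x <> a)).
      - apply UF. exists (fun x => (J x /\ Bad a x) \/ x = a). split.
        + apply cnt_union2. apply Bad_cnt; auto. exists (fun _ => 0). intros; congruence.
        + intros x Jx N. split; auto. split; intros X; apply N; auto.
      - intros x [Jx [Nb Nx]]. apply NNPP. intros N. apply (Hanti a x Ja Jx (fun E => Nx (eq_sym E))).
        apply Good; auto.
        + intros j s Lj Rj Cs E. apply Nb. left. exists j, s. auto.
        + intros k b Lk Rk Cb E. apply Nb. right; left. exists k, b. auto.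
        + intros i j Li Lj Ri Rj. split.
          * intros Pr. apply N. exists (i, j). split.
            -- apply in_prod; apply in_seq; lia.
            -- unfold S; simpl; auto.
          * intros Pr. apply Nb. right; right. exists i, j. auto. }
    set (code := fun a => epsilon (inhabits 0) (fun c => exists ij, In ij L /\ U (S a ij) /\ c = to_nat ij)).
    assert (Hcode : forall a, J a -> exists ij, In ij L /\ U (S a ij) /\ code a = to_nat ij).
    { intros a Ja. unfold code. apply (epsilon_spec (inhabits 0) (fun c => exists ij, In ij L /\ U (S a ij) /\ c = to_nat ij)).
      destruct (HS a Ja) as [ij [I Ui]]. exists (to_nat ij), ij. auto. }
    destruct (pigeon_nat J code HJunc) as [c Hc].
    set (K := fun x => J x /\ code x = c).
    destruct (uncnt_ne _ Hc) as [a0 [Ja0 Ca0]].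
    destruct (Hcode a0 Ja0) as [[i j] [Iij [Uij Eij]]].
    assert (HK : forall a, K a -> U (S a (i, j))).
    { intros a [Ja Ca]. destruct (Hcode a Ja) as [[i' j'] [_ [U' E']]].
      rewrite Ca, <- Ca0, Eij in E'. apply code_inj in E'. destruct E'; subst; auto. }
    assert (Li : i < n) by (apply in_prod_iff in Iij; destruct Iij as [X _]; apply in_seq in X; lia).
    assert (Ri : ~ rootu i) by (destruct (UE _ Uij) as [x [X _]]; auto).
    set (B := fun s => exists a, K a /\ s = uu i a).
    assert (CB : countable B).
    { apply Hnb.
      - intros s [a [[Ja _] E]]. subst. apply (c_T _ _ (HJc a Ja)). apply uu_in; auto.
      - intros s t [a [Ka Ea]] [b [Kb Eb]]. subst.
        destruct (UE _ (UI _ _ (HK a Ka) (HK b Kb))) as [x [[_ [_ P1]] [_ [_ P2]]]].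
        simpl in P1, P2. destruct Ka as [Ja _], Kb as [Jb _].
        apply (prefix_comparable _ _ _ (c_seq _ _ (HJc a Ja) _ HT (uu_in a i Ja Li))
                 (c_seq _ _ (HJc b Jb) _ HT (uu_in b i Jb Li)) P1 P2). }
    apply Hc. apply cnt_sub with (A := fun x => exists s, B s /\ (fun s x => J x /\ uu i x = s) s x).
    + intros x Kx. exists (uu i x). split. exists x; auto. split; auto. apply Kx.
    + apply cnt_union; auto. intros s _. apply freeu_cnt; auto.
Qed.
End Final.
Theorem main_ccc (T : sq W -> Prop) (HT : is_tree lt T) (Hnb : no_uncountable_branch T) : ccc lt T.
Proof.
  intros A HA Hanti. apply NNPP. intros HAu.
  destruct (pigeon_nat A (fun p => length (LU p)) HAu) as [n Hn].
  destruct (pigeon_nat _ (fun p => length (LV p)) Hn) as [m Hm].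
  destruct (stab_list (map uu (seq 0 n)) _ Hm) as [J3 [S3 [U3 T3]]].
  destruct (stab_list (map vv (seq 0 m)) J3 U3) as [J4 [S4 [U4 T4]]].
  set (LA := map (fun kl => Alt (fst kl) (snd kl)) (list_prod (seq 0 m) (seq 0 m)) ++
             map Acol (seq 0 m) ++ map Af (seq 0 n)).
  destruct (stab_list LA J4 U4) as [J [S5 [U5 T5]]].
  assert (Cst : forall g, In g LA -> forall x y, J x -> J y -> g x = g y).
  { intros g I x y Jx Jy. destruct (stable_nat J g U5 (T5 g I)) as [c Hc]. rewrite (Hc x Jx), (Hc y Jy). auto. }
  assert (JA : forall x, J x -> (A x /\ length (LU x) = n) /\ length (LV x) = m).
  { intros x Jx. apply S3. apply S4. apply S5. auto. }
  apply (KL T HT Hnb J n m).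
  - intros x Jx. apply HA. apply JA; auto.
  - intros x Jx. apply JA; auto.
  - intros x Jx. apply JA; auto.
  - intros i Li. apply (stable_mono J3); [intros x Jx; apply S4; apply S5; auto|]. apply T3.
    apply in_map. apply in_seq. lia.
  - intros k Lk. apply (stable_mono J4); [intros x Jx; apply S5; auto|]. apply T4.
    apply in_map. apply in_seq. lia.
  - intros k l x y Lk Ll Jx Jy H.
    assert (E : Alt k l x = Alt k l y).
    { apply (Cst (Alt k l)); auto. apply in_app_iff. left.
      apply (in_map (fun kl => Alt (fst kl) (snd kl)) _ (k, l)). apply in_prod; apply in_seq; lia. }
    unfold Alt in E. destruct (excluded_middle_informative (clt x (vv k x) (vv l x))); [|contradiction].
    destruct (excluded_middle_informative (clt y (vv k y) (vv l y))); auto. discriminate.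
  - intros k x y Lk Jx Jy. apply (Cst (Acol k)); auto. apply in_app_iff. right. apply in_app_iff. left.
    apply in_map. apply in_seq. lia.
  - intros i x y Li Jx Jy. apply (Cst (Af i)); auto. apply in_app_iff. right. apply in_app_iff. right.
    apply in_map. apply in_seq. lia.
  - auto.
  - intros a x Ja Jx N. apply Hanti; auto; apply JA; auto.
Qed.
End Ord.

Theorem lemma5p7 (W : Type) (lt : W -> W -> Prop) (Hw : is_omega1 lt)
  (T : sq W -> Prop) (HT : is_tree lt T) (Hcard : @card_aleph1 W T)
  (Hnb : @no_uncountable_branch W T) :
  ccc lt T.
Proof. exact (main_ccc W lt Hw T HT Hnb). Qed.
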